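(* Let $c>0$, $\alpha>0$ and $g\in C^2(\mathbb{R})$. Let $w(x,t)=\frac{1}{2c}\int_{x-ct}^{x+ct}g(y)\,dy$ be the solution of the wave equation $\frac{\partial^2 w}{\partial t^2}= c^2 \frac{\partial^2 w}{\partial x^2}$ with $w(x,0)=0$, $\frac{\partial w}{\partial t}(x,0)=g(x)$. Define $$v(x,t)=\frac{2}{B(\alpha,\frac12)}\int_0^1(1-u^2)^{\alpha-1}\,w(x,ut)\,du .$$ Then $v$ solves $$\frac{\partial^2 v}{\partial t^2}+\frac{2\alpha}{t}\frac{\partial v}{\partial t}= c^2 \frac{\partial^2 v}{\partial x^2}+\frac{2g(x)}{t\,B(\alpha,\frac12)},\quad t>0,$$ with $v(x,0)=0$ and $\frac{\partial v}{\partial t}(x,0)=\frac{\Gamma(\alpha+\frac12)}{\sqrt{\pi}\,\Gamma(\alpha+1)}\,g(x)$.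
   Context: $B(a,b)=\Gamma(a)\Gamma(b)/\Gamma(a+b)$ denotes the Beta function. *)

(* Defs.v *)
From Stdlib Require Import Reals Lra ClassicalEpsilon.
Open Scope R_scope.

Definition is_RInt (f : R -> R) (a b l : R) : Prop :=
  exists pr : Riemann_integrable f a b, RiemannInt pr = l.
Definition RInt (f : R -> R) (a b : R) : R :=
  epsilon (inhabits 0) (fun l => is_RInt f a b l).

Definition is_int_0_1 (f : R -> R) (l : R) : Prop :=
  forall eps, 0 < eps -> exists d, 0 < d /\
    forall b, 1 - d < b < 1 ->
      exists pr : Riemann_integrable f 0 b, Rabs (RiemannInt pr - l) < eps.
Definition int_0_1 (f : R -> R) : R :=
  epsilon (inhabits 0) (fun l => is_int_0_1 f l).

Definition is_int_0_inf (f : R -> R) (l : R) : Prop :=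
  forall eps, 0 < eps -> exists d N, 0 < d /\
    forall e M, 0 < e < d -> N < M ->
      exists pr : Riemann_integrable f e M, Rabs (RiemannInt pr - l) < eps.

Definition Gamma (a : R) : R :=
  epsilon (inhabits 0)
    (fun l => is_int_0_inf (fun t => Rpower t (a - 1) * exp (- t)) l).

Definition Beta (a b : R) : R := Gamma a * Gamma b / Gamma (a + b).

Definition wave_sol (c : R) (g : R -> R) (x t : R) : R :=
  / (2 * c) * RInt g (x - c * t) (x + c * t).

Definition v_sol (alpha c : R) (g : R -> R) (x t : R) : R :=
  2 / Beta alpha (1 / 2) *
  int_0_1 (fun u => Rpower (1 - u ^ 2) (alpha - 1) * wave_sol c g x (u * t)).

Definition right_deriv (f : R -> R) (x l : R) : Prop :=
  forall eps, 0 < eps -> exists d, 0 < d /\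
    forall h, 0 < h < d -> Rabs ((f (x + h) - f x) / h - l) < eps.

(* Main.v *)
From Coquelicot Require Import Coquelicot.
From Stdlib Require Import Reals Lra Lia ClassicalEpsilon FunctionalExtensionality.
Require Import Defs.
Open Scope R_scope.

Notation CInt := RInt.RInt.

Lemma Rabs_minus_le a b : Rabs (a - b) <= Rabs a + Rabs b.
Proof. unfold Rabs; repeat destruct Rcase_abs; lra. Qed.

Definition lim1 (H : R -> R) (L : R) : Prop :=
  forall eps, 0 < eps -> exists d, 0 < d /\ forall b, 1 - d < b < 1 -> Rabs (H b - L) < eps.

Lemma lim1_unique H L1 L2 : lim1 H L1 -> lim1 H L2 -> L1 = L2.
Proof.
  intros h1 h2. destruct (Req_dec L1 L2) as [e|ne]; auto.
  set (eps := Rabs (L1 - L2) / 2).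
  assert (Hе : 0 < eps) by (unfold eps; assert (0 < Rabs (L1 - L2)) by (apply Rabs_pos_lt; intro; apply ne; lra); lra).
  destruct (h1 eps Hе) as [d1 [d1p H1]]. destruct (h2 eps Hе) as [d2 [d2p H2]].
  set (b := 1 - Rmin d1 d2 / 2).
  assert (Hm1 := Rmin_l d1 d2). assert (Hm2 := Rmin_r d1 d2).
  assert (Hm3 : 0 < Rmin d1 d2) by (apply Rmin_pos; auto).
  specialize (H1 b ltac:(unfold b; lra)). specialize (H2 b ltac:(unfold b; lra)).
  assert (Rabs (L1 - L2) <= Rabs (H b - L2) + Rabs (H b - L1)).
  { replace (L1 - L2) with ((H b - L2) - (H b - L1)) by ring.
    eapply Rle_trans; [apply Rabs_minus_le|]; lra. }
  unfold eps in *; lra.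
Qed.

Lemma lim1_plus H1 H2 L1 L2 : lim1 H1 L1 -> lim1 H2 L2 ->
  lim1 (fun b => H1 b + H2 b) (L1 + L2).
Proof.
  intros h1 h2 eps he.
  destruct (h1 (eps/2) ltac:(lra)) as [d1 [d1p A]].
  destruct (h2 (eps/2) ltac:(lra)) as [d2 [d2p B]].
  exists (Rmin d1 d2); split; [apply Rmin_pos; auto|].
  intros b hb. assert (Hm1 := Rmin_l d1 d2). assert (Hm2 := Rmin_r d1 d2).
  specialize (A b ltac:(lra)). specialize (B b ltac:(lra)).
  replace (H1 b + H2 b - (L1 + L2)) with ((H1 b - L1) + (H2 b - L2)) by ring.
  eapply Rle_lt_trans; [apply Rabs_triang|]. lra.
Qed.

Lemma lim1_scal H L k : lim1 H L -> lim1 (fun b => k * H b) (k * L).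
Proof.
  intros h eps he.
  destruct (h (eps / (Rabs k + 1))) as [d [dp A]].
  { apply Rdiv_lt_0_compat; auto. assert (0 <= Rabs k) by apply Rabs_pos. lra. }
  exists d; split; auto. intros b hb. specialize (A b hb).
  replace (k * H b - k * L) with (k * (H b - L)) by ring.
  rewrite Rabs_mult.
  assert (0 <= Rabs k) by apply Rabs_pos.
  assert (Rabs k * Rabs (H b - L) <= Rabs k * (eps / (Rabs k + 1))).
  { apply Rmult_le_compat_l; lra. }
  assert (Rabs k * (eps / (Rabs k + 1)) < eps).
  { apply (Rmult_lt_reg_r (Rabs k + 1)); [lra|].
    field_simplify; lra. }
  lra.
Qed.

Lemma lim1_ext H1 H2 L : (forall b, 0 < b < 1 -> H1 b = H2 b) -> lim1 H1 L -> lim1 H2 L.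
Proof.
  intros e h eps he. destruct (h eps he) as [d [dp A]].
  exists (Rmin d 1); split; [apply Rmin_pos; lra|].
  intros b hb. assert (Hm1 := Rmin_l d 1). assert (Hm2 := Rmin_r d 1).
  rewrite <- e by lra. apply A; lra.
Qed.

Lemma lim1_const L : lim1 (fun _ => L) L.
Proof. intros eps he; exists 1; split; [lra|]; intros; rewrite Rminus_diag, Rabs_R0; lra. Qed.

Lemma is_int_0_1_of F l :
  (exists d, 0 < d /\ forall b, 1 - d < b < 1 -> ex_RInt F 0 b) ->
  lim1 (fun b => CInt F 0 b) l -> is_int_0_1 F l.
Proof.
  intros [d0 [d0p E]] h eps he. destruct (h eps he) as [d [dp A]].
  exists (Rmin d d0); split; [apply Rmin_pos; auto|].
  intros b hb. assert (Hm1 := Rmin_l d d0). assert (Hm2 := Rmin_r d d0).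
  assert (ex : ex_RInt F 0 b) by (apply E; lra).
  exists (ex_RInt_Reals_0 _ _ _ ex). rewrite <- RInt_Reals. apply A; lra.
Qed.

Lemma is_int_0_1_lim1 F l : is_int_0_1 F l -> lim1 (fun b => CInt F 0 b) l.
Proof.
  intros h eps he. destruct (h eps he) as [d [dp A]]. exists d; split; auto.
  intros b hb. destruct (A b hb) as [pr B]. rewrite (RInt_Reals _ _ _ pr). auto.
Qed.

Lemma int_0_1_eq F l : is_int_0_1 F l -> int_0_1 F = l.
Proof.
  intros h. unfold int_0_1.
  pose proof (epsilon_spec (inhabits 0) (fun l => is_int_0_1 F l) (ex_intro _ l h)) as H; simpl in *.
  apply is_int_0_1_lim1 in h. apply is_int_0_1_lim1 in H. exact (lim1_unique _ _ _ H h).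
Qed.

Lemma DefsRInt_eq (g : R -> R) (a b : R) : (forall x : R, continuous g x) -> Defs.RInt g a b = CInt g a b.
Proof.
  intros hc. assert (ex : ex_RInt g a b) by (apply (ex_RInt_continuous (V:=R_CompleteNormedModule)); intros; apply hc).
  unfold Defs.RInt.
  assert (E : exists l, is_RInt g a b l).
  { exists (CInt g a b). exists (ex_RInt_Reals_0 _ _ _ ex). rewrite <- RInt_Reals. auto. }
  destruct (epsilon_spec (inhabits 0) (fun l => is_RInt g a b l) E) as [pr H].
  rewrite <- H. rewrite <- RInt_Reals. auto.
Qed.
Definition rho (a u : R) : R := Rpower (1 - u ^ 2) (a - 1).
Definition Pw (a u : R) : R := Rpower (1 - u ^ 2) a.

Lemma Rpower_pos x y : 0 < Rpower x y.
Proof. unfold Rpower; apply exp_pos. Qed.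

Lemma rho_pos a u : 0 < rho a u.
Proof. apply Rpower_pos. Qed.

Lemma Pw_pos a u : 0 < Pw a u.
Proof. apply Rpower_pos. Qed.

Lemma Pw_eq a u : -1 < u < 1 -> Pw a u = rho a u * (1 - u ^ 2).
Proof.
  intros hu. unfold Pw, rho.
  assert (h : 0 < 1 - u ^ 2) by nra.
  replace a with ((a - 1) + 1) at 1 by ring.
  rewrite Rpower_plus, Rpower_1 by auto. ring.
Qed.

Lemma Pw0 a : Pw a 0 = 1.
Proof. unfold Pw. replace (1 - 0 ^ 2) with 1 by ring. unfold Rpower. rewrite ln_1, Rmult_0_r, exp_0; auto. Qed.

Lemma Pw_deriv a u : -1 < u < 1 -> derivable_pt_lim (Pw a) u (- 2 * a * u * rho a u).
Proof.
  intros hu. assert (h : 0 < 1 - u ^ 2) by nra.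
  unfold Pw.
  replace (- 2 * a * u * rho a u) with ((a * Rpower (1 - u^2) (a - 1)) * (0 - INR 2 * u ^ (2 - 1)))
    by (unfold rho; simpl; ring).
  apply (derivable_pt_lim_comp (fun u => 1 - u ^ 2) (fun x => Rpower x a)).
  - apply derivable_pt_lim_minus; [apply derivable_pt_lim_const| apply derivable_pt_lim_pow].
  - apply derivable_pt_lim_power; auto.
Qed.

Lemma rho_cont a u : -1 < u < 1 -> continuity_pt (rho a) u.
Proof.
  intros hu. assert (h : 0 < 1 - u ^ 2) by nra.
  unfold rho. apply (continuity_pt_comp (fun u => 1 - u ^ 2) (fun x => Rpower x (a - 1))).
  - apply continuity_pt_minus; [apply continuity_pt_const; intros ? ?; auto| apply derivable_continuous_pt, derivable_pt_pow].
  - apply derivable_continuous_pt. exists ((a - 1) * Rpower (1 - u ^ 2) (a - 1 - 1)).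
    apply derivable_pt_lim_power; auto.
Qed.

Lemma rho_bound a u : 0 < a -> 0 <= u < 1 -> rho a u <= 2 + 2 * u * rho a u.
Proof.
  intros ha hu. assert (hr := rho_pos a u).
  destruct (Rle_lt_dec (1/2) u) as [h|h].
  - assert (rho a u <= 2 * u * rho a u) by nra. lra.
  - assert (rho a u <= 2); [|nra].
    unfold rho, Rpower.
    assert (h1 : 3/4 <= 1 - u ^ 2 <= 1) by (simpl; nra).
    assert (hl : ln (1 - u^2) <= 0).
    { rewrite <- ln_1. apply ln_le; lra. }
    assert (hl2 : - ln 2 <= ln (1 - u^2)).
    { rewrite <- ln_Rinv by lra. apply ln_le; lra. }
    assert (hln2 : 0 < ln 2) by (rewrite <- ln_1; apply ln_increasing; lra).
    assert ((a - 1) * ln (1 - u ^ 2) <= ln 2).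
    { destruct (Rle_lt_dec 1 a); nra. }
    rewrite <- (exp_ln 2) by lra. apply exp_le_3 || (destruct (Rle_lt_or_eq_dec _ _ H) as [H'|H']; [left; apply exp_increasing; auto| right; rewrite H'; auto]).
Qed.

Lemma Pw_small a : 0 < a -> forall eps, 0 < eps -> exists d, 0 < d /\
  forall b, 1 - d < b < 1 -> Pw a b < eps.
Proof.
  intros ha eps he. exists (Rmin 1 (Rpower eps (/ a) / 2)). split.
  { apply Rmin_pos; [lra|]. assert (H := Rpower_pos eps (/a)). lra. }
  intros b hb. assert (Hm1 := Rmin_l 1 (Rpower eps (/ a) / 2)). assert (Hm2 := Rmin_r 1 (Rpower eps (/ a) / 2)).
  assert (hq : 0 < 1 - b ^ 2) by nra.
  assert (hq2 : 1 - b ^ 2 < Rpower eps (/ a)) by nra.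
  unfold Pw. replace eps with (Rpower (Rpower eps (/ a)) a).
  - apply Rlt_Rpower_l; auto.
  - rewrite Rpower_mult. replace (/ a * a) with 1 by (field; lra). apply Rpower_1; auto.
Qed.
Definition Cf (f : R -> R) : Prop := forall u, continuity_pt f u.
Definition Jop (a : R) (f : R -> R) : R := int_0_1 (fun u => rho a u * f u).

Lemma cont_conv (f : R -> R) x : continuity_pt f x -> continuous f x.
Proof. intros h; apply continuity_pt_filterlim; auto. Qed.

Lemma ftc (F f : R -> R) p q :
  (forall u, Rmin p q <= u <= Rmax p q -> derivable_pt_lim F u (f u)) ->
  (forall u, Rmin p q <= u <= Rmax p q -> continuity_pt f u) ->
  CInt f p q = F q - F p.
Proof.
  intros hd hc. apply is_RInt_unique.
  apply (is_RInt_derive (V:=R_CompleteNormedModule) F f).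
  - intros u hu. apply is_derive_Reals. auto.
  - intros u hu. apply cont_conv; auto.
Qed.

Lemma ex_cont (f : R -> R) p q : (forall u, Rmin p q <= u <= Rmax p q -> continuity_pt f u) -> ex_RInt f p q.
Proof.
  intros hc. apply (ex_RInt_continuous (V:=R_CompleteNormedModule)). intros; apply cont_conv; auto.
Qed.

Lemma rf_cont a f u : Cf f -> -1 < u < 1 -> continuity_pt (fun u => rho a u * f u) u.
Proof. intros hf hu. apply continuity_pt_mult; [apply rho_cont; auto| apply hf]. Qed.

Lemma ex_rf a f p q : Cf f -> 0 <= p < 1 -> 0 <= q < 1 -> ex_RInt (fun u => rho a u * f u) p q.
Proof.
  intros hf hp hq. apply ex_cont. intros u hu. apply rf_cont; auto.
  destruct (Rle_dec p q); [rewrite Rmin_left, Rmax_right in hu by lra| rewrite Rmin_right, Rmax_left in hu by lra]; lra.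
Qed.

Lemma bound_on01 f : Cf f -> exists M, 0 <= M /\ forall u, 0 <= u <= 1 -> Rabs (f u) <= M.
Proof.
  intros hf. destruct (continuity_ab_maj (fun u => Rabs (f u)) 0 1) as [m [hm _]]; [lra| |].
  - intros c _. apply (continuity_pt_comp f Rabs); [apply hf| apply Rcontinuity_abs].
  - exists (Rabs (f m)); split; [apply Rabs_pos| auto].
Qed.

Lemma int_bound_weight a M p q : 0 < a -> 0 <= p <= q -> q < 1 ->
  CInt (fun u => M * (2 + 2 * u * rho a u)) p q = M * (2 * q - Pw a q / a) - M * (2 * p - Pw a p / a).
Proof.
  intros ha hp hq.
  apply (ftc (fun u => M * (2 * u - Pw a u / a))).
  - intros u hu. rewrite Rmin_left, Rmax_right in hu by lra.
    replace (M * (2 + 2 * u * rho a u)) with (M * (2 * 1 - (- 2 * a * u * rho a u) / a)) by (field; lra).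
    apply derivable_pt_lim_scal. apply derivable_pt_lim_minus.
    + exact (derivable_pt_lim_scal id 2 u 1 (derivable_pt_lim_id u)).
    + unfold Rdiv. apply (derivable_pt_lim_div_scal (Pw a)). apply Pw_deriv; lra.
  - intros u hu. rewrite Rmin_left, Rmax_right in hu by lra.
    apply continuity_pt_mult; [apply continuity_pt_const; intros ? ?; auto|].
    apply continuity_pt_plus; [apply continuity_pt_const; intros ? ?; auto|].
    apply continuity_pt_mult; [apply continuity_pt_mult; [apply continuity_pt_const; intros ? ?; auto|apply derivable_continuous_pt, derivable_pt_id]|].
    apply rho_cont; lra.
Qed.
Lemma chasles0 (F : R -> R) p q : ex_RInt F 0 p -> ex_RInt F p q ->
  CInt F 0 q - CInt F 0 p = CInt F p q.
Proof.
  intros h1 h2. rewrite <- (RInt_Chasles F 0 p q h1 h2). simpl. unfold plus; simpl. ring.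
Qed.

Lemma tail a f M p q : 0 < a -> Cf f -> (forall u, 0 <= u <= 1 -> Rabs (f u) <= M) ->
  0 <= p <= q -> q < 1 ->
  Rabs (CInt (fun u => rho a u * f u) 0 q - CInt (fun u => rho a u * f u) 0 p)
  <= M * (2 * (q - p) + (Pw a p - Pw a q) / a).
Proof.
  intros ha hf hM hp hq.
  rewrite chasles0 by (apply ex_rf; auto; lra).
  eapply Rle_trans; [apply abs_RInt_le; [lra| apply ex_rf; auto; lra]|].
  replace (M * (2 * (q - p) + (Pw a p - Pw a q) / a)) with
    (M * (2 * q - Pw a q / a) - M * (2 * p - Pw a p / a)) by (field; lra).
  rewrite <- int_bound_weight by lra.
  apply RInt_le; [lra| | |].
  - apply ex_cont. intros u hu. rewrite Rmin_left, Rmax_right in hu by lra.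
    apply (continuity_pt_comp (fun u => rho a u * f u) Rabs); [apply rf_cont; auto; lra| apply Rcontinuity_abs].
  - apply ex_cont. intros u hu. rewrite Rmin_left, Rmax_right in hu by lra.
    apply continuity_pt_mult; [apply continuity_pt_const; intros ? ?; auto|].
    apply continuity_pt_plus; [apply continuity_pt_const; intros ? ?; auto|].
    apply continuity_pt_mult; [apply continuity_pt_mult; [apply continuity_pt_const; intros ? ?; auto|apply derivable_continuous_pt, derivable_pt_id]|].
    apply rho_cont; lra.
  - intros u hu. rewrite Rabs_mult. rewrite (Rabs_right (rho a u)) by (left; apply rho_pos).
    assert (H1 := hM u ltac:(lra)). assert (H2 := rho_bound a u ha ltac:(lra)).
    assert (H3 := rho_pos a u). assert (0 <= Rabs (f u)) by apply Rabs_pos.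
    nra.
Qed.

Lemma J_spec a f : 0 < a -> Cf f ->
  lim1 (fun b => CInt (fun u => rho a u * f u) 0 b) (Jop a f) /\
  is_int_0_1 (fun u => rho a u * f u) (Jop a f).
Proof.
  intros ha hf. destruct (bound_on01 f hf) as [M [M0 hM]].
  set (F := fun b => CInt (fun u => rho a u * f u) 0 b).
  assert (cau : forall eps, 0 < eps -> exists d, 0 < d /\ forall u v, 1 - d < u < 1 -> 1 - d < v < 1 ->
     Rabs (F v - F u) < eps).
  { intros eps he.
    destruct (Pw_small a ha (a * eps / (2 * (M + 1)))) as [d1 [d1p H1]].
    { apply Rdiv_lt_0_compat; nra. }
    exists (Rmin (Rmin d1 1) (eps / (4 * (M + 1)))). split.
    { apply Rmin_pos; [apply Rmin_pos; lra| apply Rdiv_lt_0_compat; lra]. }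
    assert (Hm1 := Rmin_l (Rmin d1 1) (eps / (4 * (M + 1)))). assert (Hm2 := Rmin_r (Rmin d1 1) (eps / (4 * (M + 1)))).
    assert (Hm3 := Rmin_l d1 1). assert (Hm4 := Rmin_r d1 1).
    set (d := Rmin (Rmin d1 1) (eps / (4 * (M + 1)))) in *.
    assert (key : forall u v, 1 - d < u <= v -> v < 1 -> Rabs (F v - F u) < eps).
    { intros u v huv hv. unfold F. eapply Rle_lt_trans; [apply (tail a f M u v); auto; lra|].
      assert (hPu := H1 u ltac:(lra)). assert (hPv := Pw_pos a v).
      assert (2 * (v - u) < eps / (2 * (M + 1))).
      { assert (eps / (4 * (M + 1)) * 2 = eps / (2 * (M + 1))) by (field; lra). lra. }
      assert ((Pw a u - Pw a v) / a < eps / (2 * (M + 1))).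
      { apply (Rmult_lt_reg_r a); auto. unfold Rdiv. rewrite Rmult_assoc, Rinv_l by lra.
        replace (eps * / (2 * (M + 1)) * a) with (a * eps / (2 * (M + 1))) by (field; lra). lra. }
      assert (M * (2 * (v - u) + (Pw a u - Pw a v) / a) <= M * (eps / (M + 1))).
      { apply Rmult_le_compat_l; auto. replace (eps / (M + 1)) with (eps / (2 * (M + 1)) + eps / (2 * (M + 1))) by (field; lra). lra. }
      assert (M * (eps / (M + 1)) < eps).
      { apply (Rmult_lt_reg_r (M + 1)); [lra|]. field_simplify; lra. }
      lra. }
    intros u v hu hv. destruct (Rle_dec u v).
    - apply key; lra.
    - rewrite Rabs_minus_sym. apply key; lra. }
  assert (ex : exists y, filterlim F (at_left 1) (locally y)).
  { apply (filterlim_locally_cauchy (F := at_left 1)). intros eps.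
    destruct (cau eps (cond_pos eps)) as [d [dp Hd]].
    exists (fun b => 1 - d < b < 1). split.
    - exists (mkposreal d dp). intros y hy hy1. simpl. split; auto.
      unfold ball in hy; simpl in hy; unfold AbsRing_ball, abs, minus, plus, opp in hy; simpl in hy.
      apply Rabs_def2 in hy. lra.
    - intros u v hu hv. unfold ball; simpl; unfold AbsRing_ball, abs, minus, plus, opp; simpl.
      apply Hd; auto. }
  destruct ex as [y hy].
  assert (hl : lim1 F y).
  { intros eps he. destruct (hy (ball y (mkposreal eps he))) as [d hd].
    { apply locally_ball. }
    exists d; split; [apply cond_pos|]. intros b hb.
    assert (hb' := hd b). unfold ball in hb'; simpl in hb'; unfold AbsRing_ball, abs, minus, plus, opp in hb'; simpl in hb'.
    apply hb'; [apply Rabs_def1; lra| lra]. }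
  assert (hi : is_int_0_1 (fun u => rho a u * f u) y).
  { apply is_int_0_1_of; auto. exists 1; split; [lra|]. intros b hb. apply ex_rf; auto; lra. }
  assert (Jop a f = y) by (apply int_0_1_eq; auto).
  rewrite H. split; auto.
Qed.
Lemma CInt_lin2 (F G : R -> R) p q x y : ex_RInt F x y -> ex_RInt G x y ->
  CInt (fun u => p * F u + q * G u) x y = p * CInt F x y + q * CInt G x y.
Proof.
  intros h1 h2. apply is_RInt_unique.
  apply (is_RInt_plus (V:=R_NormedModule) (fun u => p * F u) (fun u => q * G u)).
  - apply (is_RInt_scal (V:=R_NormedModule) F x y p). apply (RInt_correct (V:=R_CompleteNormedModule)); auto.
  - apply (is_RInt_scal (V:=R_NormedModule) G x y q). apply (RInt_correct (V:=R_CompleteNormedModule)); auto.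
Qed.

Lemma J_lim a f L : 0 < a -> Cf f -> lim1 (fun b => CInt (fun u => rho a u * f u) 0 b) L -> Jop a f = L.
Proof. intros ha hf h. destruct (J_spec a f ha hf) as [h' _]. exact (lim1_unique _ _ _ h' h). Qed.

Lemma J_bound a f M : 0 < a -> Cf f -> 0 <= M -> (forall u, 0 <= u <= 1 -> Rabs (f u) <= M) ->
  Rabs (Jop a f) <= M * (2 + 1 / a).
Proof.
  intros ha hf hM0 hM. destruct (J_spec a f ha hf) as [h _].
  destruct (Rle_dec (Rabs (Jop a f)) (M * (2 + 1 / a))) as [ok|ko]; auto. exfalso.
  destruct (h (Rabs (Jop a f) - M * (2 + 1 / a)) ltac:(lra)) as [d [dp A]].
  set (b := Rmax (1 - d / 2) 0).
  assert (hb1 : 1 - d / 2 <= b) by apply Rmax_l. assert (hb2 : 0 <= b) by apply Rmax_r.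
  assert (hb3 : b < 1) by (unfold b; apply Rmax_lub_lt; lra).
  specialize (A b ltac:(lra)).
  assert (T := tail a f M 0 b ha hf hM ltac:(lra) hb3).
  rewrite RInt_point in T. simpl in T. unfold zero in T; simpl in T. rewrite Rminus_0_r, Pw0 in T.
  assert (M * (2 * (b - 0) + (1 - Pw a b) / a) <= M * (2 + 1 / a)).
  { apply Rmult_le_compat_l; auto. assert (hp := Pw_pos a b).
    assert ((1 - Pw a b) / a <= 1 / a). { unfold Rdiv; apply Rmult_le_compat_r; [left; apply Rinv_0_lt_compat; auto| lra]. }
    lra. }
  assert (Rabs (Jop a f) <= Rabs (CInt (fun u => rho a u * f u) 0 b - Jop a f) +
                          Rabs (CInt (fun u => rho a u * f u) 0 b)).
  { rewrite Rabs_minus_sym. replace (Jop a f) with ((Jop a f - CInt (fun u => rho a u * f u) 0 b) + CInt (fun u => rho a u * f u) 0 b) at 1 by ring.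
    apply Rabs_triang. }
  lra.
Qed.

Lemma J_lin a f g p q : 0 < a -> Cf f -> Cf g ->
  Jop a (fun u => p * f u + q * g u) = p * Jop a f + q * Jop a g.
Proof.
  intros ha hf hg. apply J_lim; [exact ha| |].
  - intros u. apply continuity_pt_plus; apply continuity_pt_mult;
      [apply continuity_pt_const; intros ? ?; reflexivity| apply hf| apply continuity_pt_const; intros ? ?; reflexivity| apply hg].
  - apply lim1_ext with (fun b => p * CInt (fun u => rho a u * f u) 0 b + q * CInt (fun u => rho a u * g u) 0 b).
    + intros b hb. rewrite <- CInt_lin2 by (apply ex_rf; auto; lra).
      apply RInt_ext. intros x _. simpl. ring.
    + apply lim1_plus; apply lim1_scal; apply J_spec; auto.
Qed.

Lemma J_id a : 0 < a -> Jop a (fun u => u) = 1 / (2 * a).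
Proof.
  intros ha. apply J_lim; auto.
  - intros u; apply derivable_continuous_pt, derivable_pt_id.
  - apply lim1_ext with (fun b => (1 - Pw a b) / (2 * a)).
    + intros b hb. symmetry.
      replace ((1 - Pw a b) / (2 * a)) with ((- Pw a b / (2 * a)) - (- Pw a 0 / (2 * a))) by (rewrite Pw0; field; lra).
      apply (ftc (fun u => - Pw a u / (2 * a))).
      * intros u hu. rewrite Rmin_left, Rmax_right in hu by lra.
        replace (rho a u * u) with (- (- 2 * a * u * rho a u) / (2 * a)) by (field; lra).
        unfold Rdiv. apply (derivable_pt_lim_div_scal (fun u => - Pw a u)). apply derivable_pt_lim_opp. apply Pw_deriv; lra.
      * intros u hu. rewrite Rmin_left, Rmax_right in hu by lra.
        apply continuity_pt_mult; [apply rho_cont; lra| apply derivable_continuous_pt, derivable_pt_id].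
    + intros eps he. destruct (Pw_small a ha (2 * a * eps)) as [d [dp H]]; [nra|].
      exists d; split; auto. intros b hb. specialize (H b hb). assert (hp := Pw_pos a b).
      replace ((1 - Pw a b) / (2 * a) - 1 / (2 * a)) with (- (Pw a b / (2 * a))) by (field; lra).
      rewrite Rabs_Ropp, Rabs_right.
      * apply (Rmult_lt_reg_r (2 * a)); [lra|]. field_simplify; lra.
      * left; apply Rdiv_lt_0_compat; lra.
Qed.
Lemma Cf_lin f g p q : Cf f -> Cf g -> Cf (fun u => p * f u + q * g u).
Proof.
  intros hf hg u. apply continuity_pt_plus; apply continuity_pt_mult;
      [apply continuity_pt_const; intros ? ?; reflexivity| apply hf| apply continuity_pt_const; intros ? ?; reflexivity| apply hg].
Qed.

Lemma DUI a (phi Dphi : R -> R -> R) y0 : 0 < a ->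
  (forall y, Cf (phi y)) -> (forall y, Cf (Dphi y)) ->
  (forall y u, derivable_pt_lim (fun z => phi z u) y (Dphi y u)) ->
  (forall eps, 0 < eps -> exists d, 0 < d /\ forall y u, Rabs (y - y0) < d -> 0 <= u <= 1 ->
      Rabs (Dphi y u - Dphi y0 u) <= eps) ->
  derivable_pt_lim (fun y => Jop a (phi y)) y0 (Jop a (Dphi y0)).
Proof.
  intros ha hc hdc hd hu eps he.
  set (C := 2 + 1 / a). assert (hC : 0 < C) by (unfold C; assert (0 < 1 / a) by (apply Rdiv_lt_0_compat; lra); lra).
  destruct (hu (eps / (2 * C))) as [d [dp hdd]]; [apply Rdiv_lt_0_compat; lra|].
  exists (mkposreal d dp). intros h hh hhd. simpl in hhd.
  set (D := fun u => 1 * phi (y0 + h) u + (-1) * phi y0 u).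
  set (q := fun u => / h * D u + (-1) * Dphi y0 u).
  assert (e1 : Jop a D = Jop a (phi (y0 + h)) - Jop a (phi y0)).
  { unfold D; rewrite J_lin; auto. ring. }
  assert (e2 : Jop a q = / h * Jop a D + (-1) * Jop a (Dphi y0)).
  { unfold q; rewrite J_lin; auto. unfold D; apply Cf_lin; auto. }
  replace ((Jop a (phi (y0 + h)) - Jop a (phi y0)) / h - Jop a (Dphi y0)) with (Jop a q)
    by (rewrite e2, e1; field; auto).
  assert (bq : forall u, 0 <= u <= 1 -> Rabs (q u) <= eps / (2 * C)).
  { intros u hu01.
    destruct (MVT_gen (fun z => phi z u) y0 (y0 + h) (fun z => Dphi z u)) as [c [hc1 hc2]].
    - intros x _. apply is_derive_Reals. apply hd.
    - intros x _. apply derivable_continuous_pt. exists (Dphi x u). apply hd.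
    - assert (qe : q u = Dphi c u - Dphi y0 u).
      { unfold q, D. cbv beta in hc2. replace (phi (y0 + h) u) with (phi y0 u + Dphi c u * (y0 + h - y0)) by lra. field. auto. }
      rewrite qe. apply hdd; auto.
      assert (Rabs (c - y0) <= Rabs h).
      { destruct (Rle_dec y0 (y0 + h)).
        - rewrite Rmin_left, Rmax_right in hc1 by lra. rewrite (Rabs_right h) by lra. rewrite Rabs_right; lra.
        - rewrite Rmin_right, Rmax_left in hc1 by lra. rewrite (Rabs_left h) by lra. rewrite Rabs_left1; lra. }
      lra. }
  eapply Rle_lt_trans; [apply (J_bound a q (eps / (2 * C))); auto|].
  - unfold q. apply Cf_lin; auto. unfold D; apply Cf_lin; auto.
  - left; apply Rdiv_lt_0_compat; lra.
  - fold C. replace (eps / (2 * C) * C) with (eps / 2) by (field; lra). lra.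
Qed.
Lemma unif_arg (f : R -> R) (arg : R -> R -> R) y0 Rb K : Cf f -> 0 <= K ->
  (forall y u, Rabs (y - y0) <= 1 -> 0 <= u <= 1 -> Rabs (arg y u) <= Rb) ->
  (forall y u, 0 <= u <= 1 -> Rabs (arg y u - arg y0 u) <= K * Rabs (y - y0)) ->
  forall eps, 0 < eps -> exists d, 0 < d /\ forall y u, Rabs (y - y0) < d -> 0 <= u <= 1 ->
    Rabs (f (arg y u) - f (arg y0 u)) <= eps.
Proof.
  intros hf hK hb hl eps he.
  destruct (Heine f (fun x => - Rb <= x <= Rb) (compact_P3 _ _) (fun x _ => hf x) (mkposreal eps he)) as [dl hdl].
  exists (Rmin 1 (dl / (K + 1))). split.
  { apply Rmin_pos; [lra| apply Rdiv_lt_0_compat; [apply cond_pos| lra]]. }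
  intros y u hy hu. assert (Hm1 := Rmin_l 1 (dl / (K + 1))). assert (Hm2 := Rmin_r 1 (dl / (K + 1))).
  left. apply hdl.
  - assert (H := hb y u ltac:(lra) hu). apply Rabs_le_inv in H || (unfold Rabs in H; destruct Rcase_abs in H; lra). auto.
  - assert (H := hb y0 u ltac:(rewrite Rminus_diag, Rabs_R0; lra) hu). unfold Rabs in H; destruct Rcase_abs in H; lra.
  - eapply Rle_lt_trans; [apply hl; auto|].
    assert (hdl0 := cond_pos dl).
    assert (0 <= Rabs (y - y0)) by apply Rabs_pos.
    assert (K * Rabs (y - y0) <= K * (dl / (K + 1))) by (apply Rmult_le_compat_l; lra).
    assert (K * (dl / (K + 1)) < dl). { apply (Rmult_lt_reg_r (K + 1)); [lra|]. field_simplify; lra. }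
    lra.
Qed.
Definition Gp (g : R -> R) (y : R) : R := CInt g 0 y.
Definition W c g x s := (Gp g (x + c * s) - Gp g (x - c * s)) / (2 * c).
Definition W1 c (g : R -> R) x s := (g (x + c * s) + g (x - c * s)) / 2.
Definition W2 c (g' : R -> R) x s := c * (g' (x + c * s) - g' (x - c * s)) / 2.
Definition X1 c (g : R -> R) x s := (g (x + c * s) - g (x - c * s)) / (2 * c).
Definition X2 c (g' : R -> R) x s := (g' (x + c * s) - g' (x - c * s)) / (2 * c).

Lemma Cf_of_deriv (g g' : R -> R) : (forall x, derivable_pt_lim g x (g' x)) -> Cf g.
Proof. intros h u. apply derivable_continuous_pt. exists (g' u). apply h. Qed.

Lemma Gp_deriv g y : Cf g -> derivable_pt_lim (Gp g) y (g y).
Proof.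
  intros hg. apply is_derive_Reals.
  apply (is_derive_RInt (V:=R_NormedModule) g (Gp g) 0 y).
  - exists (mkposreal 1 Rlt_0_1). intros b _. unfold Gp.
    apply (RInt_correct (V:=R_CompleteNormedModule)). apply ex_cont. intros; apply hg.
  - apply cont_conv, hg.
Qed.

Lemma Derive_of (f f' : R -> R) y : (forall z, derivable_pt_lim f z (f' z)) -> Derive f y = f' y.
Proof. intros h. apply is_derive_unique. apply is_derive_Reals. apply h. Qed.

Lemma ex_derive_of (f f' : R -> R) y : (forall z, derivable_pt_lim f z (f' z)) -> ex_derive f y.
Proof. intros h. exists (f' y). apply is_derive_Reals. apply h. Qed.

Lemma wave_eq c g x s : 0 < c -> Cf g -> wave_sol c g x s = W c g x s.
Proof.
  intros hc hg. unfold wave_sol, W, Gp. rewrite DefsRInt_eq by (intros; apply cont_conv, hg).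
  rewrite chasles0 by (apply ex_cont; intros; apply hg). unfold Rdiv; ring.
Qed.

Ltac fixargs := repeat match goal with |- context [?x + - ?y] => replace (x + - y) with (x - y) by ring end.

Lemma dWs c g x s : 0 < c -> Cf g -> derivable_pt_lim (fun s => W c g x s) s (W1 c g x s).
Proof.
  intros hc hg. apply is_derive_Reals. unfold W.
  auto_derive.
  - split; [apply (ex_derive_of _ g); intros; apply Gp_deriv; auto|].
    split; [apply (ex_derive_of _ g); intros; apply Gp_deriv; auto|]. auto.
  - rewrite !(Derive_of (Gp g) g) by (intros; apply Gp_deriv; auto). unfold W1. fixargs. field. lra.
Qed.

Lemma dWx c g x s : 0 < c -> Cf g -> derivable_pt_lim (fun y => W c g y s) x (X1 c g x s).
Proof.
  intros hc hg. apply is_derive_Reals. unfold W.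
  auto_derive.
  - split; [apply (ex_derive_of _ g); intros; apply Gp_deriv; auto|].
    split; [apply (ex_derive_of _ g); intros; apply Gp_deriv; auto|]. auto.
  - rewrite !(Derive_of (Gp g) g) by (intros; apply Gp_deriv; auto). unfold X1. fixargs. field. lra.
Qed.

Lemma dW1s c g g' x s : 0 < c -> (forall x, derivable_pt_lim g x (g' x)) ->
  derivable_pt_lim (fun s => W1 c g x s) s (W2 c g' x s).
Proof.
  intros hc hg. apply is_derive_Reals. unfold W1.
  auto_derive.
  - split; [apply (ex_derive_of _ g'); auto|].
    split; [apply (ex_derive_of _ g'); auto|]. auto.
  - rewrite !(Derive_of g g') by auto. unfold W2. fixargs. field.
Qed.

Lemma dX1x c g g' x s : 0 < c -> (forall x, derivable_pt_lim g x (g' x)) ->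
  derivable_pt_lim (fun y => X1 c g y s) x (X2 c g' x s).
Proof.
  intros hc hg. apply is_derive_Reals. unfold X1.
  auto_derive.
  - split; [apply (ex_derive_of _ g'); auto|].
    split; [apply (ex_derive_of _ g'); auto|]. auto.
  - rewrite !(Derive_of g g') by auto. unfold X2. fixargs. field. lra.
Qed.

Lemma cont_pm (F : R -> R) c x k : Cf F -> Cf (fun s => k * (F (x + c * s) + F (x - c * s))) /\
   Cf (fun s => k * (F (x + c * s) - F (x - c * s))).
Proof.
  intros hF. assert (h1 : Cf (fun s => F (x + c * s))).
  { intros s. apply (continuity_pt_comp (fun s => x + c * s) F); [|apply hF].
    apply derivable_continuous_pt. exists (c). apply is_derive_Reals. auto_derive; auto; ring. }
  assert (h2 : Cf (fun s => F (x - c * s))).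
  { intros s. apply (continuity_pt_comp (fun s => x - c * s) F); [|apply hF].
    apply derivable_continuous_pt. exists (- c). apply is_derive_Reals. auto_derive; auto; ring. }
  split; intros s; apply continuity_pt_mult; try (apply continuity_pt_const; intros ? ?; reflexivity).
  - apply continuity_pt_plus; auto.
  - apply continuity_pt_minus; auto.
Qed.

Lemma dlin u t : derivable_pt_lim (fun t => u * t) t u.
Proof. apply is_derive_Reals. auto_derive; auto; ring. Qed.

Lemma dlin2 u t : derivable_pt_lim (fun u => u * t) u t.
Proof. apply is_derive_Reals. auto_derive; auto; ring. Qed.

Lemma dscale (F F' : R -> R) u t : (forall s, derivable_pt_lim F s (F' s)) ->
  derivable_pt_lim (fun t => F (u * t)) t (u * F' (u * t)).
Proof.
  intros h. replace (u * F' (u * t)) with (F' (u * t) * u) by ring.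
  apply (derivable_pt_lim_comp (fun t => u * t) F).
  - apply dlin.
  - apply h.
Qed.

Lemma Cf_scale (F : R -> R) t : Cf F -> Cf (fun u => F (u * t)).
Proof.
  intros h u. apply (continuity_pt_comp (fun u => u * t) F); [|apply h].
  apply derivable_continuous_pt. exists t. apply dlin2.
Qed.
Lemma unif_comb (F : R -> R) (A B Dphi : R -> R -> R) y0 Rb K k :
  Cf F -> 0 <= K -> 0 <= k ->
  (forall y u, Rabs (y - y0) <= 1 -> 0 <= u <= 1 -> Rabs (A y u) <= Rb /\ Rabs (B y u) <= Rb) ->
  (forall y u, 0 <= u <= 1 -> Rabs (A y u - A y0 u) <= K * Rabs (y - y0) /\ Rabs (B y u - B y0 u) <= K * Rabs (y - y0)) ->
  (forall y u, 0 <= u <= 1 -> Rabs (Dphi y u - Dphi y0 u) <=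
       k * (Rabs (F (A y u) - F (A y0 u)) + Rabs (F (B y u) - F (B y0 u)))) ->
  forall eps, 0 < eps -> exists d, 0 < d /\ forall y u, Rabs (y - y0) < d -> 0 <= u <= 1 ->
      Rabs (Dphi y u - Dphi y0 u) <= eps.
Proof.
  intros hF hK hk hb hl hD eps he.
  set (e' := eps / (2 * (k + 1))). assert (he' : 0 < e') by (apply Rdiv_lt_0_compat; lra).
  destruct (unif_arg F A y0 Rb K hF hK (fun y u h1 h2 => proj1 (hb y u h1 h2)) (fun y u h => proj1 (hl y u h)) e' he') as [d1 [d1p H1]].
  destruct (unif_arg F B y0 Rb K hF hK (fun y u h1 h2 => proj2 (hb y u h1 h2)) (fun y u h => proj2 (hl y u h)) e' he') as [d2 [d2p H2]].
  exists (Rmin d1 d2); split; [apply Rmin_pos; auto|].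
  intros y u hy hu. assert (Hm1 := Rmin_l d1 d2). assert (Hm2 := Rmin_r d1 d2).
  eapply Rle_trans; [apply hD; auto|].
  assert (a1 := H1 y u ltac:(lra) hu). assert (a2 := H2 y u ltac:(lra) hu).
  assert (k * (Rabs (F (A y u) - F (A y0 u)) + Rabs (F (B y u) - F (B y0 u))) <= k * (2 * e')).
  { apply Rmult_le_compat_l; lra. }
  assert (k * (2 * e') <= eps).
  { unfold e'. replace (k * (2 * (eps / (2 * (k + 1))))) with (eps * (k / (k + 1))) by (field; lra).
    assert (k / (k + 1) <= 1). { apply (Rmult_le_reg_r (k + 1)); [lra|]. field_simplify; lra. }
    nra. }
  lra.
Qed.

Lemma abs_prod_le u y y0 : 0 <= u <= 1 -> Rabs (y - y0) <= 1 -> Rabs (u * y) <= Rabs y0 + 1.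
Proof.
  intros hu hy. rewrite Rabs_mult, (Rabs_right u) by lra.
  assert (Rabs y <= Rabs y0 + 1).
  { replace y with (y0 + (y - y0)) by ring. eapply Rle_trans; [apply Rabs_triang| lra]. }
  assert (0 <= Rabs y) by apply Rabs_pos. nra.
Qed.

Lemma argt_bound c x t0 y u : 0 < c -> Rabs (y - t0) <= 1 -> 0 <= u <= 1 ->
  Rabs (x + c * (u * y)) <= Rabs x + c * (Rabs t0 + 1) /\ Rabs (x - c * (u * y)) <= Rabs x + c * (Rabs t0 + 1).
Proof.
  intros hc hy hu. assert (h := abs_prod_le u y t0 hu hy).
  assert (Rabs (c * (u * y)) <= c * (Rabs t0 + 1)).
  { rewrite Rabs_mult, (Rabs_right c) by lra. apply Rmult_le_compat_l; lra. }
  split.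
  - eapply Rle_trans; [apply Rabs_triang| lra].
  - eapply Rle_trans; [apply Rabs_minus_le| lra].
Qed.

Lemma argt_lip c x t0 y u : 0 < c -> 0 <= u <= 1 ->
  Rabs (x + c * (u * y) - (x + c * (u * t0))) <= c * Rabs (y - t0) /\
  Rabs (x - c * (u * y) - (x - c * (u * t0))) <= c * Rabs (y - t0).
Proof.
  intros hc hu.
  assert (Rabs (c * (u * (y - t0))) <= c * Rabs (y - t0)).
  { rewrite !Rabs_mult, (Rabs_right c), (Rabs_right u) by lra.
    assert (0 <= Rabs (y - t0)) by apply Rabs_pos. apply Rmult_le_compat_l; [lra|]. nra. }
  split.
  - replace (x + c * (u * y) - (x + c * (u * t0))) with (c * (u * (y - t0))) by ring. auto.
  - replace (x - c * (u * y) - (x - c * (u * t0))) with (- (c * (u * (y - t0)))) by ring. rewrite Rabs_Ropp; auto.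
Qed.

Lemma argx_bound c t x0 y u : 0 < c -> Rabs (y - x0) <= 1 -> 0 <= u <= 1 ->
  Rabs (y + c * (u * t)) <= Rabs x0 + 1 + c * Rabs t /\ Rabs (y - c * (u * t)) <= Rabs x0 + 1 + c * Rabs t.
Proof.
  intros hc hy hu.
  assert (Rabs (c * (u * t)) <= c * Rabs t).
  { rewrite !Rabs_mult, (Rabs_right c), (Rabs_right u) by lra.
    assert (0 <= Rabs t) by apply Rabs_pos. apply Rmult_le_compat_l; [lra|]. nra. }
  assert (Rabs y <= Rabs x0 + 1).
  { replace y with (x0 + (y - x0)) by ring. eapply Rle_trans; [apply Rabs_triang| lra]. }
  split.
  - eapply Rle_trans; [apply Rabs_triang| lra].
  - eapply Rle_trans; [apply Rabs_minus_le| lra].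
Qed.

Lemma argx_lip c t x0 y u :
  Rabs (y + c * (u * t) - (x0 + c * (u * t))) <= 1 * Rabs (y - x0) /\
  Rabs (y - c * (u * t) - (x0 - c * (u * t))) <= 1 * Rabs (y - x0).
Proof.
  split; [replace (y + c * (u * t) - (x0 + c * (u * t))) with (y - x0) by ring|
          replace (y - c * (u * t) - (x0 - c * (u * t))) with (y - x0) by ring]; lra.
Qed.

Lemma abs_pm_bound k p q r s : Rabs (k * ((p + q) - (r + s))) <= Rabs k * (Rabs (p - r) + Rabs (q - s)).
Proof.
  rewrite Rabs_mult. apply Rmult_le_compat_l; [apply Rabs_pos|].
  replace (p + q - (r + s)) with ((p - r) + (q - s)) by ring. apply Rabs_triang.
Qed.

Lemma abs_mm_bound k p q r s : Rabs (k * ((p - q) - (r - s))) <= Rabs k * (Rabs (p - r) + Rabs (q - s)).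
Proof.
  rewrite Rabs_mult. apply Rmult_le_compat_l; [apply Rabs_pos|].
  replace (p - q - (r - s)) with ((p - r) - (q - s)) by ring. apply Rabs_minus_le.
Qed.
Lemma half_bound u A : 0 <= u <= 1 -> 0 <= A -> Rabs (u / 2) * A <= / 2 * A.
Proof. intros hu hA. rewrite Rabs_right by lra. nra. Qed.

Lemma sq_bound u A : 0 <= u <= 1 -> 0 <= A -> Rabs (u * u * /2) * A <= / 2 * A.
Proof. intros hu hA. assert (u * u <= 1) by nra. assert (0 <= u * u) by nra. rewrite Rabs_right by nra. assert (u * u * / 2 <= / 2) by lra. nra. Qed.


Lemma D1 a c g g' K x t : 0 < a -> 0 < c -> (forall x, derivable_pt_lim g x (g' x)) ->
  derivable_pt_lim (fun s => K * Jop a (fun u => W c g x (u * s))) t (K * Jop a (fun u => u * W1 c g x (u * t))).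
Proof.
  intros ha hc hg. assert (cg := Cf_of_deriv g g' hg).
  apply (derivable_pt_lim_scal (fun s => Jop a (fun u => W c g x (u * s))) K t).
  apply (DUI a (fun s u => W c g x (u * s)) (fun s u => u * W1 c g x (u * s)) t ha).
  - intros y. apply Cf_scale. apply (Cf_of_deriv _ (W1 c g x)). intros; apply dWs; auto.
  - intros y u. apply continuity_pt_mult; [apply derivable_continuous_pt, derivable_pt_id|].
    apply Cf_scale. unfold W1. unfold Rdiv. 
    assert (H := proj1 (cont_pm g c x (/2) cg)). intros s. 
    eapply continuity_pt_ext; [|apply H]. intros; simpl; ring.
  - intros y u. apply dscale. intros s; apply dWs; auto.
  - apply (unif_comb g (fun y u => x + c * (u * y)) (fun y u => x - c * (u * y)) (fun y u => u * W1 c g x (u * y)) t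
             (Rabs x + c * (Rabs t + 1)) c (/ 2)); auto; try lra.
    + intros y u h1 h2. apply argt_bound; auto.
    + intros y u h. apply argt_lip; auto.
    + intros y u hu. unfold W1.
      replace (u * ((g (x + c * (u * y)) + g (x - c * (u * y))) / 2) -
               u * ((g (x + c * (u * t)) + g (x - c * (u * t))) / 2))
        with ((u / 2) * ((g (x + c * (u * y)) + g (x - c * (u * y))) - (g (x + c * (u * t)) + g (x - c * (u * t))))) by field.
      eapply Rle_trans; [apply abs_pm_bound|]. apply half_bound; auto.
      assert (H1 := Rabs_pos (g (x + c * (u * y)) - g (x + c * (u * t)))).
      assert (H2 := Rabs_pos (g (x - c * (u * y)) - g (x - c * (u * t)))). lra.
Qed.
Lemma Cf_W1 c g x : Cf g -> Cf (W1 c g x).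
Proof.
  intros cg. unfold W1, Rdiv. assert (H := proj1 (cont_pm g c x (/2) cg)). intros s.
  eapply continuity_pt_ext; [|apply H]. intros; simpl; ring.
Qed.
Lemma Cf_W2 c g' x : Cf g' -> Cf (W2 c g' x).
Proof.
  intros cg. unfold W2, Rdiv. assert (H := proj2 (cont_pm g' c x (c * /2) cg)). intros s.
  eapply continuity_pt_ext; [|apply H]. intros; simpl; ring.
Qed.
Lemma Cf_X1 c g x : Cf g -> Cf (X1 c g x).
Proof.
  intros cg. unfold X1, Rdiv. assert (H := proj2 (cont_pm g c x (/ (2 * c)) cg)). intros s.
  eapply continuity_pt_ext; [|apply H]. intros; simpl; ring.
Qed.
Lemma Cf_X2 c g' x : Cf g' -> Cf (X2 c g' x).
Proof.
  intros cg. unfold X2, Rdiv. assert (H := proj2 (cont_pm g' c x (/ (2 * c)) cg)). intros s.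
  eapply continuity_pt_ext; [|apply H]. intros; simpl; ring.
Qed.
Lemma Cf_W c g x : 0 < c -> Cf g -> Cf (W c g x).
Proof. intros hc cg. apply (Cf_of_deriv _ (W1 c g x)). intros; apply dWs; auto. Qed.
Lemma Cf_id_mult F : Cf F -> Cf (fun u => u * F u).
Proof. intros h u. apply continuity_pt_mult; [apply derivable_continuous_pt, derivable_pt_id| apply h]. Qed.

Lemma D2 a c g g' g'' K x t : 0 < a -> 0 < c -> (forall x, derivable_pt_lim g x (g' x)) ->
  (forall x, derivable_pt_lim g' x (g'' x)) ->
  derivable_pt_lim (fun s => K * Jop a (fun u => u * W1 c g x (u * s))) t
     (K * Jop a (fun u => u * (u * W2 c g' x (u * t)))).
Proof.
  intros ha hc hg hg2. assert (cg := Cf_of_deriv g g' hg). assert (cg' := Cf_of_deriv g' g'' hg2).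
  apply (derivable_pt_lim_scal (fun s => Jop a (fun u => u * W1 c g x (u * s))) K t).
  apply (DUI a (fun s u => u * W1 c g x (u * s)) (fun s u => u * (u * W2 c g' x (u * s))) t ha).
  - intros y. apply Cf_id_mult, Cf_scale, Cf_W1; auto.
  - intros y. apply Cf_id_mult, Cf_id_mult, Cf_scale, Cf_W2; auto.
  - intros y u. apply (derivable_pt_lim_scal (fun z => W1 c g x (u * z)) u y).
    apply dscale. intros s; apply dW1s; auto.
  - apply (unif_comb g' (fun y u => x + c * (u * y)) (fun y u => x - c * (u * y))
             (fun y u => u * (u * W2 c g' x (u * y))) t
             (Rabs x + c * (Rabs t + 1)) c (c / 2)); auto; try lra.
    + intros y u h1 h2. apply argt_bound; auto.
    + intros y u h. apply argt_lip; auto.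
    + intros y u hu. unfold W2.
      match goal with |- Rabs (?L - ?R) <= _ =>
        replace (L - R) with ((u * u * (c / 2)) * ((g' (x + c * (u * y)) - g' (x - c * (u * y))) - (g' (x + c * (u * t)) - g' (x - c * (u * t))))) by field end.
      eapply Rle_trans; [apply abs_mm_bound|].
      assert (H1 := Rabs_pos (g' (x + c * (u * y)) - g' (x + c * (u * t)))).
      assert (H2 := Rabs_pos (g' (x - c * (u * y)) - g' (x - c * (u * t)))).
      assert (u * u <= 1) by nra. assert (0 <= u * u) by nra.
      rewrite Rabs_right by nra. apply Rmult_le_compat_r; [lra|]. nra.
Qed.

Lemma D3 a c g g' K x t : 0 < a -> 0 < c -> (forall x, derivable_pt_lim g x (g' x)) ->
  derivable_pt_lim (fun y => K * Jop a (fun u => W c g y (u * t))) x (K * Jop a (fun u => X1 c g x (u * t))).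
Proof.
  intros ha hc hg. assert (cg := Cf_of_deriv g g' hg).
  apply (derivable_pt_lim_scal (fun y => Jop a (fun u => W c g y (u * t))) K x).
  apply (DUI a (fun y u => W c g y (u * t)) (fun y u => X1 c g y (u * t)) x ha).
  - intros y. apply Cf_scale, Cf_W; auto.
  - intros y. apply Cf_scale, Cf_X1; auto.
  - intros y u. apply dWx; auto.
  - apply (unif_comb g (fun y u => y + c * (u * t)) (fun y u => y - c * (u * t))
             (fun y u => X1 c g y (u * t)) x
             (Rabs x + 1 + c * Rabs t) 1 (/ (2 * c))); auto; try lra.
    + left; apply Rinv_0_lt_compat; lra.
    + intros y u h1 h2. apply argx_bound; auto.
    + intros y u h. apply argx_lip; auto.
    + intros y u hu. unfold X1.
      match goal with |- Rabs (?L - ?R) <= _ =>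
        replace (L - R) with ((/ (2 * c)) * ((g (y + c * (u * t)) - g (y - c * (u * t))) - (g (x + c * (u * t)) - g (x - c * (u * t))))) by (field; lra) end.
      eapply Rle_trans; [apply abs_mm_bound|].
      rewrite Rabs_right by (left; apply Rinv_0_lt_compat; lra). lra.
Qed.

Lemma D4 a c g g' g'' K x t : 0 < a -> 0 < c -> (forall x, derivable_pt_lim g x (g' x)) ->
  (forall x, derivable_pt_lim g' x (g'' x)) ->
  derivable_pt_lim (fun y => K * Jop a (fun u => X1 c g y (u * t))) x (K * Jop a (fun u => X2 c g' x (u * t))).
Proof.
  intros ha hc hg hg2. assert (cg := Cf_of_deriv g g' hg). assert (cg' := Cf_of_deriv g' g'' hg2).
  apply (derivable_pt_lim_scal (fun y => Jop a (fun u => X1 c g y (u * t))) K x).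
  apply (DUI a (fun y u => X1 c g y (u * t)) (fun y u => X2 c g' y (u * t)) x ha).
  - intros y. apply Cf_scale, Cf_X1; auto.
  - intros y. apply Cf_scale, Cf_X2; auto.
  - intros y u. apply dX1x; auto.
  - apply (unif_comb g' (fun y u => y + c * (u * t)) (fun y u => y - c * (u * t))
             (fun y u => X2 c g' y (u * t)) x
             (Rabs x + 1 + c * Rabs t) 1 (/ (2 * c))); auto; try lra.
    + left; apply Rinv_0_lt_compat; lra.
    + intros y u h1 h2. apply argx_bound; auto.
    + intros y u h. apply argx_lip; auto.
    + intros y u hu. unfold X2.
      match goal with |- Rabs (?L - ?R) <= _ =>
        replace (L - R) with ((/ (2 * c)) * ((g' (y + c * (u * t)) - g' (y - c * (u * t))) - (g' (x + c * (u * t)) - g' (x - c * (u * t))))) by (field; lra) end.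
      eapply Rle_trans; [apply abs_mm_bound|].
      rewrite Rabs_right by (left; apply Rinv_0_lt_compat; lra). lra.
Qed.
Lemma dpl_eq f x l l' : derivable_pt_lim f x l -> l = l' -> derivable_pt_lim f x l'.
Proof. intros h e; subst; auto. Qed.

Lemma ID a c g g' g'' x t : 0 < a -> 0 < c -> 0 < t -> (forall x, derivable_pt_lim g x (g' x)) ->
  (forall x, derivable_pt_lim g' x (g'' x)) ->
  Jop a (fun u => u * (u * W2 c g' x (u * t))) + 2 * a / t * Jop a (fun u => u * W1 c g x (u * t))
  = c ^ 2 * Jop a (fun u => X2 c g' x (u * t)) + g x / t.
Proof.
  intros ha hc ht hg hg2. assert (cg := Cf_of_deriv g g' hg). assert (cg' := Cf_of_deriv g' g'' hg2).
  set (f1 := fun u => u * (u * W2 c g' x (u * t))).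
  set (f2 := fun u => X2 c g' x (u * t)).
  set (f3 := fun u => u * W1 c g x (u * t)).
  set (f4 := fun u => W2 c g' x (u * t)).
  assert (c1 : Cf f1) by (apply Cf_id_mult, Cf_id_mult, Cf_scale, Cf_W2; auto).
  assert (c2 : Cf f2) by (apply Cf_scale, Cf_X2; auto).
  assert (c3 : Cf f3) by (apply Cf_id_mult, Cf_scale, Cf_W1; auto).
  assert (c4 : Cf f4) by (apply Cf_scale, Cf_W2; auto).
  assert (e1 : c ^ 2 * Jop a f2 = Jop a f4).
  { replace (c ^ 2 * Jop a f2) with (c ^ 2 * Jop a f2 + 0 * Jop a f2) by ring.
    rewrite <- J_lin by auto. f_equal. apply functional_extensionality. intros u.
    unfold f2, f4, X2, W2. field. lra. }
  set (h := fun u => 1 * (1 * f1 u + (2 * a / t) * f3 u) + (-1) * f4 u).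
  assert (ch : Cf h) by (unfold h; apply Cf_lin; auto; apply Cf_lin; auto).
  assert (e2 : Jop a h = Jop a f1 + 2 * a / t * Jop a f3 - Jop a f4).
  { unfold h. rewrite J_lin; auto; [| apply Cf_lin; auto]. rewrite J_lin; auto. ring. }
  assert (e3 : Jop a h = g x / t).
  { apply J_lim; auto.
    destruct (bound_on01 (fun u => W1 c g x (u * t))) as [M [M0 hM]]; [apply Cf_scale, Cf_W1; auto|].
    apply lim1_ext with (fun b => (- (Pw a b * W1 c g x (b * t)) / t) - (- (Pw a 0 * W1 c g x (0 * t)) / t)).
    - intros b hb. symmetry. apply (ftc (fun u => - (Pw a u * W1 c g x (u * t)) / t)).
      + intros u hu. rewrite Rmin_left, Rmax_right in hu by lra.
        eapply dpl_eq.
        * unfold Rdiv. apply (derivable_pt_lim_scal_right (fun u => - (Pw a u * W1 c g x (u * t)))).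
          apply derivable_pt_lim_opp. apply derivable_pt_lim_mult; [apply Pw_deriv; lra|].
          apply (derivable_pt_lim_comp (fun u => u * t) (W1 c g x)); [apply dlin2| apply dW1s; auto].
        * rewrite Pw_eq by lra. unfold h, f1, f3, f4. field. lra.
      + intros u hu. rewrite Rmin_left, Rmax_right in hu by lra. apply rf_cont; auto; lra.
    - replace (g x / t) with (0 - (- (Pw a 0 * W1 c g x (0 * t)) / t)).
      2: { rewrite Pw0. unfold W1. replace (x + c * (0 * t)) with x by ring. replace (x - c * (0 * t)) with x by ring. field. lra. }
      replace (fun b => - (Pw a b * W1 c g x (b * t)) / t - - (Pw a 0 * W1 c g x (0 * t)) / t) with
              (fun b => 1 * (- (Pw a b * W1 c g x (b * t)) / t) + - (- (Pw a 0 * W1 c g x (0 * t)) / t)).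
      2: { apply functional_extensionality; intros; cbv beta. ring. }
      replace (0 - - (Pw a 0 * W1 c g x (0 * t)) / t) with (1 * 0 + - (- (Pw a 0 * W1 c g x (0 * t)) / t)) by ring.
      apply lim1_plus; [apply lim1_scal| apply lim1_const].
      intros eps he. destruct (Pw_small a ha (eps * t / (M + 1))) as [d [dp Hd]].
      { apply Rdiv_lt_0_compat; nra. }
      exists (Rmin d 1); split; [apply Rmin_pos; lra|]. intros b hb.
      assert (Hm1 := Rmin_l d 1). assert (Hm2 := Rmin_r d 1).
      specialize (Hd b ltac:(lra)). assert (hp := Pw_pos a b). specialize (hM b ltac:(lra)).
      rewrite Rminus_0_r. unfold Rdiv. rewrite Rabs_mult, Rabs_Ropp, Rabs_mult, (Rabs_right (Pw a b)) by lra.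
      rewrite (Rabs_right (/ t)) by (left; apply Rinv_0_lt_compat; lra).
      assert (Pw a b * Rabs (W1 c g x (b * t)) <= Pw a b * M) by (apply Rmult_le_compat_l; lra).
      assert (Pw a b * M < eps * t) .
      { assert (Pw a b * M <= Pw a b * (M + 1)) by (apply Rmult_le_compat_l; lra).
        assert (Pw a b * (M + 1) < eps * t).
        { apply (Rmult_lt_reg_r (/ (M + 1))); [apply Rinv_0_lt_compat; lra|].
          rewrite Rmult_assoc, Rinv_r, Rmult_1_r by lra. auto. }
        lra. }
      apply (Rmult_lt_reg_r t); auto. rewrite Rmult_assoc, Rinv_l, Rmult_1_r by lra. lra. }
  rewrite e1. rewrite <- e3, e2. fold f1 f3. ring.
Qed.
Lemma J_zero a : 0 < a -> Jop a (fun _ => 0) = 0.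
Proof.
  intros ha. assert (H := J_bound a (fun _ => 0) 0 ha).
  assert (Rabs (Jop a (fun _ => 0)) <= 0 * (2 + 1 / a)).
  { apply H; [intros u; apply continuity_pt_const; intros ? ?; reflexivity| lra| intros; rewrite Rabs_R0; lra]. }
  rewrite Rmult_0_l in H0. assert (H1 := Rabs_pos (Jop a (fun _ => 0))).
  apply Rabs_eq_0. lra.
Qed.

Lemma main_part (c alpha : R) (g g' g'' : R -> R) (Gfact : R)
  (hc : 0 < c) (halpha : 0 < alpha)
  (hg1 : forall x, derivable_pt_lim g x (g' x))
  (hg2 : forall x, derivable_pt_lim g' x (g'' x))
  (hG : 2 / Beta alpha (1 / 2) * (1 / (2 * alpha)) = Gfact) :
  (exists vt vtt vx vxx : R -> R -> R,
     forall x t, 0 < t ->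
       derivable_pt_lim (fun s => v_sol alpha c g x s) t (vt x t) /\
       derivable_pt_lim (fun s => vt x s) t (vtt x t) /\
       derivable_pt_lim (fun y => v_sol alpha c g y t) x (vx x t) /\
       derivable_pt_lim (fun y => vx y t) x (vxx x t) /\
       vtt x t + 2 * alpha / t * vt x t
         = c ^ 2 * vxx x t + 2 * g x / (t * Beta alpha (1 / 2)))
  /\ (forall x, v_sol alpha c g x 0 = 0)
  /\ (forall x, right_deriv (fun s => v_sol alpha c g x s) 0 (Gfact * g x)).
Proof.
  assert (cg := Cf_of_deriv g g' hg1).
  set (K := 2 / Beta alpha (1 / 2)).
  assert (veq : forall x s, v_sol alpha c g x s = K * Jop alpha (fun u => W c g x (u * s))).
  { intros x s. unfold v_sol, Jop, rho. fold K. do 2 f_equal. apply functional_extensionality; intro u.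
    rewrite wave_eq; auto. }
  assert (vf1 : forall x, (fun s => v_sol alpha c g x s) = (fun s => K * Jop alpha (fun u => W c g x (u * s)))).
  { intros x; apply functional_extensionality; intros; apply veq. }
  assert (vf2 : forall t, (fun y => v_sol alpha c g y t) = (fun y => K * Jop alpha (fun u => W c g y (u * t)))).
  { intros t; apply functional_extensionality; intros; apply veq. }
  split; [|split].
  - exists (fun x t => K * Jop alpha (fun u => u * W1 c g x (u * t))),
           (fun x t => K * Jop alpha (fun u => u * (u * W2 c g' x (u * t)))),
           (fun x t => K * Jop alpha (fun u => X1 c g x (u * t))),
           (fun x t => K * Jop alpha (fun u => X2 c g' x (u * t))).
    intros x t ht. split; [|split; [|split; [|split]]].
    + rewrite vf1. apply D1 with g'; auto.
    + apply D2 with g''; auto.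
    + rewrite vf2. apply D3 with g'; auto.
    + apply D4 with g''; auto.
    + transitivity (K * (Jop alpha (fun u => u * (u * W2 c g' x (u * t))) + 2 * alpha / t * Jop alpha (fun u => u * W1 c g x (u * t)))); [ring|].
      rewrite (ID alpha c g g' g'' x t) by auto. unfold K. unfold Rdiv. rewrite Rinv_mult. ring.
  - intros x. rewrite veq. replace (fun u => W c g x (u * 0)) with (fun _ : R => 0).
    + rewrite J_zero; auto; ring.
    + apply functional_extensionality; intros u. unfold W. replace (x + c * (u * 0)) with x by ring.
      replace (x - c * (u * 0)) with x by ring. unfold Rdiv. ring.
  - intros x eps he. rewrite vf1.
    destruct (D1 alpha c g g' K x 0 halpha hc hg1 eps he) as [d hd].
    exists d; split; [apply cond_pos|]. intros h hh.
    assert (E : K * Jop alpha (fun u => u * W1 c g x (u * 0)) = Gfact * g x).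
    { replace (fun u => u * W1 c g x (u * 0)) with (fun u => g x * u + 0 * u).
      - rewrite J_lin, J_id; auto; try (intros u; apply derivable_continuous_pt, derivable_pt_id).
        rewrite <- hG. unfold K. ring.
      - apply functional_extensionality; intros u. unfold W1.
        replace (x + c * (u * 0)) with x by ring. replace (x - c * (u * 0)) with x by ring. field. }
    rewrite <- E. apply hd; [lra| rewrite Rabs_right; lra].
Qed.
Definition lim2 (H : R -> R -> R) (L : R) : Prop :=
  forall eps, 0 < eps -> exists d N, 0 < d /\ forall e M, 0 < e < d -> N < M -> Rabs (H e M - L) < eps.

Lemma lim2_unique H L1 L2 : lim2 H L1 -> lim2 H L2 -> L1 = L2.
Proof.
  intros h1 h2. destruct (Req_dec L1 L2) as [e|ne]; auto.
  set (eps := Rabs (L1 - L2) / 2).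
  assert (He : 0 < eps) by (unfold eps; assert (0 < Rabs (L1 - L2)) by (apply Rabs_pos_lt; intro; apply ne; lra); lra).
  destruct (h1 eps He) as [d1 [N1 [d1p H1]]]. destruct (h2 eps He) as [d2 [N2 [d2p H2]]].
  set (e := Rmin d1 d2 / 2). set (M := Rmax N1 N2 + 1).
  assert (Hm1 := Rmin_l d1 d2). assert (Hm2 := Rmin_r d1 d2).
  assert (Hm3 : 0 < Rmin d1 d2) by (apply Rmin_pos; auto).
  assert (Hx1 := Rmax_l N1 N2). assert (Hx2 := Rmax_r N1 N2).
  specialize (H1 e M ltac:(unfold e; lra) ltac:(unfold M; lra)).
  specialize (H2 e M ltac:(unfold e; lra) ltac:(unfold M; lra)).
  assert (Rabs (L1 - L2) <= Rabs (H e M - L2) + Rabs (H e M - L1)).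
  { replace (L1 - L2) with ((H e M - L2) - (H e M - L1)) by ring. apply Rabs_minus_le. }
  unfold eps in *; lra.
Qed.

Lemma lim2_ext H1 H2 L : (forall e M, 0 < e < 1 -> 1 < M -> H1 e M = H2 e M) -> lim2 H1 L -> lim2 H2 L.
Proof.
  intros ex h eps he. destruct (h eps he) as [d [N [dp A]]].
  exists (Rmin d 1), (Rmax N 1). split; [apply Rmin_pos; lra|].
  intros e M he' hM. assert (H1' := Rmin_l d 1). assert (H2' := Rmin_r d 1).
  assert (H3 := Rmax_l N 1). assert (H4 := Rmax_r N 1).
  rewrite <- ex by lra. apply A; lra.
Qed.

Lemma lim2_lin H1 H2 L1 L2 p q : lim2 H1 L1 -> lim2 H2 L2 ->
  lim2 (fun e M => p * H1 e M + q * H2 e M) (p * L1 + q * L2).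
Proof.
  intros h1 h2 eps he.
  set (e' := eps / (2 * (Rabs p + Rabs q + 1))).
  assert (he' : 0 < e') by (unfold e'; apply Rdiv_lt_0_compat; [lra|]; assert (H := Rabs_pos p); assert (H' := Rabs_pos q); lra).
  destruct (h1 e' he') as [d1 [N1 [d1p A]]]. destruct (h2 e' he') as [d2 [N2 [d2p B]]].
  exists (Rmin d1 d2), (Rmax N1 N2). split; [apply Rmin_pos; auto|].
  intros e M hem hM. assert (H1' := Rmin_l d1 d2). assert (H2' := Rmin_r d1 d2).
  assert (H3 := Rmax_l N1 N2). assert (H4 := Rmax_r N1 N2).
  specialize (A e M ltac:(lra) ltac:(lra)). specialize (B e M ltac:(lra) ltac:(lra)).
  replace (p * H1 e M + q * H2 e M - (p * L1 + q * L2)) with (p * (H1 e M - L1) + q * (H2 e M - L2)) by ring.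
  eapply Rle_lt_trans; [apply Rabs_triang|]. rewrite !Rabs_mult.
  assert (hp := Rabs_pos p). assert (hq := Rabs_pos q).
  assert (Rabs p * Rabs (H1 e M - L1) <= Rabs p * e') by (apply Rmult_le_compat_l; lra).
  assert (Rabs q * Rabs (H2 e M - L2) <= Rabs q * e') by (apply Rmult_le_compat_l; lra).
  assert ((Rabs p + Rabs q) * e' < eps).
  { unfold e'. apply (Rmult_lt_reg_r (2 * (Rabs p + Rabs q + 1))); [lra|].
    field_simplify; [nra| lra]. }
  nra.
Qed.

Lemma is_int_0_inf_of f l :
  (forall e M, 0 < e -> 0 < M -> ex_RInt f e M) ->
  lim2 (fun e M => CInt f e M) l -> is_int_0_inf f l.
Proof.
  intros E h eps he. destruct (h eps he) as [d [N [dp A]]].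
  exists (Rmin d 1), (Rmax N 1). split; [apply Rmin_pos; lra|].
  intros e M he' hM. assert (H1 := Rmin_l d 1). assert (H2 := Rmin_r d 1).
  assert (H3 := Rmax_l N 1). assert (H4 := Rmax_r N 1).
  assert (ex : ex_RInt f e M) by (apply E; lra).
  exists (ex_RInt_Reals_0 _ _ _ ex). rewrite <- RInt_Reals. apply A; lra.
Qed.

Lemma is_int_0_inf_lim2 f l : is_int_0_inf f l -> lim2 (fun e M => CInt f e M) l.
Proof.
  intros h eps he. destruct (h eps he) as [d [N [dp A]]]. exists d, N; split; auto.
  intros e M h1 h2. destruct (A e M h1 h2) as [pr B]. rewrite (RInt_Reals _ _ _ pr). auto.
Qed.

Definition gf (a t : R) : R := Rpower t (a - 1) * exp (- t).

Lemma Gamma_eq a l : is_int_0_inf (gf a) l -> Gamma a = l.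
Proof.
  intros h. unfold Gamma.
  pose proof (epsilon_spec (inhabits 0) (fun l => is_int_0_inf (fun t => Rpower t (a - 1) * exp (- t)) l) (ex_intro _ l h)) as H.
  simpl in H. apply is_int_0_inf_lim2 in H. apply is_int_0_inf_lim2 in h. exact (lim2_unique _ _ _ H h).
Qed.

Lemma gf_cont a t : 0 < t -> continuity_pt (gf a) t.
Proof.
  intros ht. apply derivable_continuous_pt. unfold gf.
  apply derivable_pt_mult.
  - exists ((a - 1) * Rpower t (a - 1 - 1)). apply derivable_pt_lim_power; auto.
  - apply derivable_pt_comp; [apply derivable_pt_opp, derivable_pt_id| apply derivable_pt_exp].
Qed.

Lemma ex_pos (f : R -> R) e M : (forall t, 0 < t -> continuity_pt f t) -> 0 < e -> 0 < M -> ex_RInt f e M.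
Proof.
  intros hf he hM. apply ex_cont. intros u hu. apply hf.
  destruct (Rle_dec e M); [rewrite Rmin_left in hu by lra| rewrite Rmin_right in hu by lra]; lra.
Qed.

Lemma ln_le_lin x : 0 < x -> ln x <= x - 1.
Proof. intros hx. assert (H := exp_ineq1_le (ln x)). rewrite exp_ln in H by auto. lra. Qed.
Definition gau (x : R) : R := exp (- x ^ 2).
Definition Eg (y : R) : R := CInt gau 0 y.
Definition kf (y s : R) : R := exp (- (y ^ 2) * (1 + s ^ 2)) / (1 + s ^ 2).
Definition kk (y : R) : R := CInt (kf y) 0 1.

Lemma exp_le_mono x y : x <= y -> exp x <= exp y.
Proof. intros h; destruct (Rle_lt_or_eq_dec _ _ h) as [h'|h']; [left; apply exp_increasing; auto| rewrite h'; lra]. Qed.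

Lemma cont_of_exd (f : R -> R) x : ex_derive f x -> continuity_pt f x.
Proof. intros h. apply continuity_pt_filterlim. apply (ex_derive_continuous f x h). Qed.

Lemma Cf_gau : Cf gau.
Proof. intros u. apply cont_of_exd. unfold gau. auto_derive; auto. Qed.

Lemma Eg_deriv y : derivable_pt_lim Eg y (gau y).
Proof. apply (Gp_deriv gau y Cf_gau). Qed.

Lemma Eg_eq y : Eg y = Gp gau y.
Proof. reflexivity. Qed.

Lemma Cf_kf y : Cf (kf y).
Proof. intros u. apply cont_of_exd. unfold kf. auto_derive. assert (0 <= u ^ 2) by (apply pow2_ge_0). lra. Qed.

Lemma Derive_kf y t : Derive (fun z => kf z t) y = -2 * y * exp (- (y ^ 2) * (1 + t ^ 2)).
Proof.
  apply is_derive_unique. unfold kf. assert (0 <= t ^ 2) by (apply pow2_ge_0).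
  auto_derive; [lra|]. simpl. field. nra.
Qed.

Lemma Eg0 : Eg 0 = 0.
Proof. exact (RInt_point 0 gau). Qed.

Lemma kf_aux y t : -2 * y * exp (- y ^ 2 * (1 + t ^ 2)) = -2 * gau y * (y * gau (y * t)) + 0 * (y * gau (y * t)).
Proof. unfold gau. replace (exp (- y ^ 2 * (1 + t ^ 2))) with (exp (- y ^ 2) * exp (- (y * t) ^ 2)) by (rewrite <- exp_plus; f_equal; ring). ring. Qed.

Lemma kk_deriv y : derivable_pt_lim kk y (-2 * gau y * Eg y).
Proof.
  apply is_derive_Reals. unfold kk.
  eapply is_derive_ext; [intros; reflexivity|].
  assert (H := is_derive_RInt_param (fun u s => kf u s) 0 1 y).
  assert (e : @eq R (CInt (fun t => Derive (fun u => kf u t) y) 0 1) (-2 * gau y * Eg y)).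
  { rewrite (RInt_ext _ (fun t => (-2 * gau y) * (y * gau (y * t)) + 0 * (y * gau (y * t)))).
    2: { intros t _. rewrite Derive_kf. apply kf_aux. }
    rewrite CInt_lin2.
    - replace (CInt (fun t => y * gau (y * t)) 0 1) with (Eg y). ring.
      rewrite (ftc (fun t => Eg (y * t))).
      + replace (y * 1) with y by ring. replace (y * 0) with 0 by ring. rewrite Eg0. ring.
      + intros u _. apply (dscale Eg gau y u). apply Eg_deriv.
      + intros u _. apply continuity_pt_mult; [apply continuity_pt_const; intros ? ?; reflexivity|].
        eapply continuity_pt_ext; [|apply (Cf_scale gau y Cf_gau u)]. intros; simpl; f_equal; ring.
    - apply ex_cont. intros u _. apply continuity_pt_mult; [apply continuity_pt_const; intros ? ?; reflexivity|].
      eapply continuity_pt_ext; [|apply (Cf_scale gau y Cf_gau u)]. intros; simpl; f_equal; ring.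
    - apply ex_cont. intros u _. apply continuity_pt_mult; [apply continuity_pt_const; intros ? ?; reflexivity|].
      eapply continuity_pt_ext; [|apply (Cf_scale gau y Cf_gau u)]. intros; simpl; f_equal; ring. }
  rewrite <- e. apply H.
  - exists (mkposreal 1 Rlt_0_1). intros x0 _ t _. unfold kf. assert (0 <= t ^ 2) by (apply pow2_ge_0).
    auto_derive. lra.
  - intros t _. apply continuity_2d_pt_ext with (fun u v => (-2 * u) * exp (- (u * u) * (1 + v * v))).
    + intros u v. rewrite Derive_kf. replace (u * u) with (u ^ 2) by ring. replace (v * v) with (v ^ 2) by ring. ring.
    + apply continuity_2d_pt_mult.
      * apply continuity_2d_pt_mult; [apply continuity_2d_pt_const| apply continuity_2d_pt_id1].
      * apply (continuity_1d_2d_pt_comp exp (fun u v => - (u * u) * (1 + v * v))).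
        { apply derivable_continuous_pt, derivable_pt_exp. }
        apply continuity_2d_pt_mult.
        { apply continuity_2d_pt_opp, continuity_2d_pt_mult; apply continuity_2d_pt_id1. }
        { apply continuity_2d_pt_plus; [apply continuity_2d_pt_const|].
          apply continuity_2d_pt_mult; apply continuity_2d_pt_id2. }
  - exists (mkposreal 1 Rlt_0_1). intros y0 _. apply ex_cont. intros; apply Cf_kf.
Qed.
Definition hh (y : R) : R := kk y + Eg y * Eg y.

Lemma hh_deriv y : derivable_pt_lim hh y 0.
Proof.
  unfold hh. eapply dpl_eq.
  - apply derivable_pt_lim_plus; [apply kk_deriv| apply derivable_pt_lim_mult; apply Eg_deriv].
  - ring.
Qed.

Lemma hh_const y : hh y = hh 0.
Proof.
  destruct (MVT_gen hh 0 y (fun _ => 0)) as [c [_ hc]].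
  - intros; apply is_derive_Reals, hh_deriv.
  - intros; apply derivable_continuous_pt. exists 0. apply hh_deriv.
  - lra.
Qed.

Lemma hh0 : hh 0 = PI / 4.
Proof.
  unfold hh. rewrite Eg0. unfold kk. rewrite (ftc atan).
  - rewrite atan_1, atan_0. ring.
  - intros u _. eapply dpl_eq; [apply derivable_pt_lim_atan|]. unfold kf.
    replace (- 0 ^ 2 * (1 + u ^ 2)) with 0 by ring. rewrite exp_0. field.
    assert (0 <= u ^ 2) by apply pow2_ge_0. lra.
  - intros; apply Cf_kf.
Qed.

Lemma kk_bounds y : 0 <= kk y <= gau y.
Proof.
  assert (hk : forall s, 0 <= s -> 0 < kf y s <= gau y).
  { intros s hs. unfold kf, gau. assert (h2 : 0 <= s ^ 2) by apply pow2_ge_0.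
    assert (h3 : 0 <= y ^ 2) by apply pow2_ge_0.
    assert (exp (- y ^ 2 * (1 + s ^ 2)) <= exp (- y ^ 2)) by (apply exp_le_mono; nra).
    assert (hp := exp_pos (- y ^ 2 * (1 + s ^ 2))).
    split; [apply Rdiv_lt_0_compat; lra|].
    apply (Rmult_le_reg_r (1 + s ^ 2)); [lra|]. unfold Rdiv. rewrite Rmult_assoc, Rinv_l, Rmult_1_r by lra.
    assert (hq := exp_pos (- y ^ 2)). nra. }
  split.
  - apply RInt_ge_0; [lra| apply ex_cont; intros; apply Cf_kf|]. intros; left; apply hk; lra.
  - unfold kk. assert (H := abs_RInt_le_const (kf y) 0 1 (gau y) ltac:(lra) (ex_cont _ _ _ (fun u _ => Cf_kf y u))).
    assert (Rabs (CInt (kf y) 0 1) <= (1 - 0) * gau y).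
    { apply H. intros t ht. rewrite Rabs_right by (left; apply hk; lra). apply hk; lra. }
    assert (CInt (kf y) 0 1 <= Rabs (CInt (kf y) 0 1)) by apply RRle_abs. lra.
Qed.

Lemma gau_bounds x : 0 < gau x <= 1.
Proof.
  unfold gau. split; [apply exp_pos|]. rewrite <- exp_0. apply exp_le_mono.
  assert (0 <= x ^ 2) by apply pow2_ge_0. lra.
Qed.

Lemma Eg_bounds y : 0 <= y -> 0 <= Eg y <= y.
Proof.
  intros hy. split.
  - apply RInt_ge_0; auto; [apply ex_cont; intros; apply Cf_gau|]. intros; left; apply gau_bounds.
  - assert (H := abs_RInt_le_const gau 0 y 1 hy (ex_cont _ _ _ (fun u _ => Cf_gau u))).
    assert (Rabs (Eg y) <= (y - 0) * 1).
    { apply H. intros t _. rewrite Rabs_right by (left; apply gau_bounds). apply gau_bounds. }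
    assert (Eg y <= Rabs (Eg y)) by apply RRle_abs. lra.
Qed.

Lemma gauss_lim : forall eps, 0 < eps -> exists N, 0 < N /\ forall y, N < y -> Rabs (Eg y - sqrt PI / 2) < eps.
Proof.
  intros eps he.
  set (s := sqrt PI / 2).
  assert (hs : 0 < s) by (unfold s; assert (0 < sqrt PI) by (apply sqrt_lt_R0, PI_RGT_0); lra).
  assert (hs2 : s * s = PI / 4) by (unfold s; replace (sqrt PI / 2 * (sqrt PI / 2)) with (sqrt PI * sqrt PI / 4) by field; rewrite sqrt_sqrt; [lra| left; apply PI_RGT_0]).
  exists (Rmax 1 (/ (eps * s))). split; [assert (H0 := Rmax_l 1 (/ (eps * s))); lra|].
  intros y hy. assert (H1 := Rmax_l 1 (/ (eps * s))). assert (H2 := Rmax_r 1 (/ (eps * s))).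
  assert (hE := Eg_bounds y ltac:(lra)).
  assert (hk := kk_bounds y).
  assert (hc := hh_const y). rewrite hh0 in hc. unfold hh in hc.
  assert (hEs : Eg y * Eg y - s * s = - kk y) by lra.
  assert (hg : gau y < eps * s).
  { unfold gau. assert (exp (- y ^ 2) <= exp (- y)) by (apply exp_le_mono; simpl; nra).
    assert (exp (- y) < / (1 + y)).
    { rewrite exp_Ropp. apply Rinv_lt_contravar; [assert (Hep := exp_pos y); nra|]. apply exp_ineq1. lra. }
    assert (/ (1 + y) < eps * s).
    { assert (0 < eps * s) by nra.
      apply (Rmult_lt_reg_r (1 + y)); [lra|]. rewrite Rinv_l by lra.
      assert (/ (eps * s) * (eps * s) = 1) by (field; lra).
      assert (eps * s * (1 + y) > eps * s * (/ (eps * s))) by (apply Rmult_lt_compat_l; lra).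
      nra. }
    lra. }
  fold s. replace (Eg y - s) with ((Eg y * Eg y - s * s) / (Eg y + s)) by (field; lra).
  rewrite hEs. unfold Rdiv. rewrite Rabs_mult, Rabs_Ropp, Rabs_right by lra.
  rewrite Rabs_right by (left; apply Rinv_0_lt_compat; lra).
  apply (Rmult_lt_reg_r (Eg y + s)); [lra|]. rewrite Rmult_assoc, Rinv_l, Rmult_1_r by lra.
  nra.
Qed.
Lemma Gamma_half : Gamma (1 / 2) = sqrt PI.
Proof.
  apply Gamma_eq. apply is_int_0_inf_of.
  { intros e M he hM. apply ex_pos; auto. intros; apply gf_cont; auto. }
  apply lim2_ext with (fun e M => 2 * Eg (sqrt M) - 2 * Eg (sqrt e)).
  { intros e M he hM. symmetry. apply (ftc (fun t => 2 * Eg (sqrt t))).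
    - intros u hu. rewrite Rmin_left, Rmax_right in hu by lra.
      assert (hsq : 0 < sqrt u) by (apply sqrt_lt_R0; lra).
      eapply dpl_eq.
      + apply (derivable_pt_lim_scal (fun t => Eg (sqrt t)) 2 u).
        apply (derivable_pt_lim_comp sqrt Eg); [apply derivable_pt_lim_sqrt; lra| apply Eg_deriv].
      + unfold gf, gau. rewrite pow2_sqrt by lra.
        replace (1 / 2 - 1) with (- (/ 2)) by field. rewrite Rpower_Ropp, Rpower_sqrt by lra.
        field. lra.
    - intros u hu. rewrite Rmin_left, Rmax_right in hu by lra. apply gf_cont; lra. }
  intros eps he.
  destruct (gauss_lim (eps / 4) ltac:(lra)) as [N [Np HN]].
  exists (Rmin 1 ((eps / 4) ^ 2)), (Rmax 1 (N ^ 2)). split; [apply Rmin_pos; [lra| apply pow_lt; lra]|].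
  intros e M hem hM.
  assert (H1 := Rmin_l 1 ((eps / 4) ^ 2)). assert (H2 := Rmin_r 1 ((eps / 4) ^ 2)).
  assert (H3 := Rmax_l 1 (N ^ 2)). assert (H4 := Rmax_r 1 (N ^ 2)).
  assert (hsM : N < sqrt M).
  { rewrite <- (sqrt_pow2 N) by lra. apply sqrt_lt_1_alt. split; [apply pow2_ge_0| lra]. }
  assert (hse : sqrt e < eps / 4).
  { rewrite <- (sqrt_pow2 (eps / 4)) by lra. apply sqrt_lt_1_alt. lra. }
  assert (hE := Eg_bounds (sqrt e) (sqrt_pos e)).
  specialize (HN (sqrt M) hsM).
  replace (2 * Eg (sqrt M) - 2 * Eg (sqrt e) - sqrt PI) with (2 * (Eg (sqrt M) - sqrt PI / 2) - 2 * Eg (sqrt e)) by field.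
  eapply Rle_lt_trans; [apply Rabs_minus_le|]. rewrite !Rabs_mult, Rabs_right by lra.
  rewrite (Rabs_right (Eg (sqrt e))) by lra. lra.
Qed.
Lemma mono_lim (Hf : R -> R) N0 Bd : (forall x y, N0 < x -> x <= y -> Hf x <= Hf y) ->
  (forall x, N0 < x -> Hf x <= Bd) ->
  exists L, forall eps, 0 < eps -> exists N, forall M, N < M -> Rabs (Hf M - L) < eps.
Proof.
  intros hm hb.
  set (E := fun v => exists x, N0 < x /\ v = Hf x).
  assert (bE : bound E) by (exists Bd; intros v [x [hx ->]]; apply hb; auto).
  assert (nE : exists v, E v) by (exists (Hf (N0 + 1)); exists (N0 + 1); split; [lra| auto]).
  destruct (completeness E bE nE) as [L [hub hlub]].
  exists L. intros eps he.
  destruct (classic (exists x0, N0 < x0 /\ L - eps < Hf x0)) as [[x0 [hx0 hH]]|nex].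
  - exists x0. intros M hM.
    assert (Hf x0 <= Hf M) by (apply hm; lra).
    assert (Hf M <= L) by (apply hub; exists M; split; [lra| auto]).
    rewrite Rabs_left1 by lra. lra.
  - exfalso. assert (L <= L - eps); [|lra].
    apply hlub. intros v [x [hx ->]].
    destruct (Rle_dec (Hf x) (L - eps)) as [ok|ko]; auto.
    exfalso; apply nex; exists x; split; auto; lra.
Qed.

Lemma log_bound m t : 0 < m -> 0 < t -> m * ln t <= t / 2 + m * (ln (2 * m) - 1).
Proof.
  intros hm ht. assert (HH1 := ln_le_lin (t / (2 * m)) ltac:(apply Rdiv_lt_0_compat; lra)).
  unfold Rdiv in HH1. rewrite ln_mult in HH1 by (try apply Rinv_0_lt_compat; lra).
  rewrite ln_Rinv in HH1 by lra.
  assert (H0 : m * ln t <= m * (t * / (2 * m) - 1 + ln (2 * m))) by (apply Rmult_le_compat_l; lra).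
  replace (m * (t * / (2 * m) - 1 + ln (2 * m))) with (t / 2 + m * (ln (2 * m) - 1)) in H0 by (field; lra).
  auto.
Qed.

Lemma Rpower_1_l a : Rpower 1 a = 1.
Proof. unfold Rpower. rewrite ln_1, Rmult_0_r, exp_0. auto. Qed.

Lemma gf_pos a t : 0 < gf a t.
Proof. unfold gf. apply Rmult_lt_0_compat; [apply Rpower_pos| apply exp_pos]. Qed.

Lemma gf_small a t : 0 < t <= 1 -> gf a t <= Rpower t (a - 1).
Proof.
  intros ht. unfold gf. assert (exp (- t) <= 1) by (rewrite <- exp_0; apply exp_le_mono; lra).
  assert (Hp := Rpower_pos t (a - 1)). nra.
Qed.

Lemma gf_large a t : 1 <= t ->
  gf a t <= exp ((Rabs (a - 1) + 1) * (ln (2 * (Rabs (a - 1) + 1)) - 1)) * exp (- t / 2).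
Proof.
  intros ht. set (m := Rabs (a - 1) + 1). assert (hm : 0 < m) by (unfold m; assert (HH2 := Rabs_pos (a - 1)); lra).
  unfold gf, Rpower. rewrite <- !exp_plus. apply exp_le_mono.
  assert (hl : 0 <= ln t) by (rewrite <- ln_1; destruct (Rle_lt_or_eq_dec 1 t ht) as [h|h]; [left; apply ln_increasing; lra| rewrite h; lra]).
  assert ((a - 1) * ln t <= m * ln t).
  { apply Rmult_le_compat_r; auto. unfold m. assert (Hra := RRle_abs (a - 1)). lra. }
  assert (Hlb := log_bound m t hm ltac:(lra)). lra.
Qed.

Lemma Gamma_exists a : 0 < a -> exists l, is_int_0_inf (gf a) l.
Proof.
  intros ha.
  assert (exg : forall e M, 0 < e -> 0 < M -> ex_RInt (gf a) e M) by (intros; apply ex_pos; auto; intros; apply gf_cont; auto).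
  set (A := fun e => CInt (gf a) e 1). set (B := fun M => CInt (gf a) 1 M).
  assert (nonneg : forall x y, 0 < x -> x <= y -> 0 <= CInt (gf a) x y).
  { intros x y hx hxy. apply RInt_ge_0; auto; [apply exg; lra|]. intros; left; apply gf_pos. }
  destruct (mono_lim (fun M => A (/ M)) 1 (1 / a)) as [LA hLA].
  { intros x y hx hxy. unfold A.
    assert (0 < / y) by (apply Rinv_0_lt_compat; lra). assert (/ y <= / x) by (apply Rinv_le_contravar; lra).
    assert (/ x < 1) by (rewrite <- Rinv_1; apply Rinv_lt_contravar; lra).
    rewrite <- (RInt_Chasles (gf a) (/ y) (/ x) 1) by (apply exg; lra).
    simpl. unfold plus; simpl. assert (HH3 := nonneg (/ y) (/ x) ltac:(lra) ltac:(lra)). lra. }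
  { intros x hx. unfold A. assert (he : 0 < / x) by (apply Rinv_0_lt_compat; lra).
    assert (he1 : / x < 1) by (rewrite <- Rinv_1; apply Rinv_lt_contravar; lra).
    assert (Hle : CInt (gf a) (/ x) 1 <= CInt (fun t => Rpower t (a - 1)) (/ x) 1).
    { apply RInt_le; [lra| apply exg; lra| |].
      - apply ex_cont. intros u hu. rewrite Rmin_left, Rmax_right in hu by lra.
        apply derivable_continuous_pt. exists ((a - 1) * Rpower u (a - 1 - 1)). apply derivable_pt_lim_power; lra.
      - intros; apply gf_small; lra. }
    rewrite (ftc (fun t => Rpower t a / a) (fun t => Rpower t (a - 1))) in Hle.
    - rewrite Rpower_1_l in Hle. assert (Hp := Rpower_pos (/ x) a).
      assert ((1 - Rpower (/ x) a) / a <= 1 / a).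
      { unfold Rdiv. apply Rmult_le_compat_r; [left; apply Rinv_0_lt_compat; auto| lra]. }
      replace (1 / a - Rpower (/ x) a / a) with ((1 - Rpower (/ x) a) / a) in Hle by (field; lra). lra.
    - intros u hu. rewrite Rmin_left, Rmax_right in hu by lra.
      eapply dpl_eq; [unfold Rdiv; apply (derivable_pt_lim_scal_right (fun t => Rpower t a)); apply derivable_pt_lim_power; lra|].
      field. lra.
    - intros u hu. rewrite Rmin_left, Rmax_right in hu by lra.
      apply derivable_continuous_pt. exists ((a - 1) * Rpower u (a - 1 - 1)). apply derivable_pt_lim_power; lra. }
  set (C := exp ((Rabs (a - 1) + 1) * (ln (2 * (Rabs (a - 1) + 1)) - 1))).
  assert (hC : 0 < C) by apply exp_pos.
  destruct (mono_lim B 1 (2 * C)) as [LB hLB].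
  { intros x y hx hxy. unfold B.
    rewrite <- (RInt_Chasles (gf a) 1 x y) by (apply exg; lra).
    simpl. unfold plus; simpl. assert (HH4 := nonneg x y ltac:(lra) ltac:(lra)). lra. }
  { intros x hx. unfold B.
    assert (Hle : CInt (gf a) 1 x <= CInt (fun t => C * exp (- t / 2)) 1 x).
    { apply RInt_le; [lra| apply exg; lra| |].
      - apply ex_cont. intros u hu. apply cont_of_exd. auto_derive. auto.
      - intros; apply gf_large; lra. }
    rewrite (ftc (fun t => - 2 * C * exp (- t / 2)) (fun t => C * exp (- t / 2))) in Hle.
    - assert (exp (- x / 2) > 0) by apply exp_pos.
      assert (exp (- (1) / 2) <= 1) by (apply Rle_trans with (exp 0); [apply exp_le_mono; lra| rewrite exp_0; lra]).
      assert (0 < C * exp (- x / 2)) by (apply Rmult_lt_0_compat; lra). assert (C * exp (- (1) / 2) <= C * 1) by (apply Rmult_le_compat_l; lra). lra.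
    - intros u hu. apply is_derive_Reals. auto_derive; auto. unfold Rdiv. field.
    - intros u hu. apply cont_of_exd. auto_derive. auto. }
  exists (LA + LB). apply is_int_0_inf_of; auto.
  intros eps he.
  destruct (hLA (eps / 2) ltac:(lra)) as [NA hA]. destruct (hLB (eps / 2) ltac:(lra)) as [NB hB].
  exists (/ (Rmax NA 1 + 1)), (Rmax NB 1). split.
  { apply Rinv_0_lt_compat. assert (HH5 := Rmax_r NA 1). lra. }
  intros e M hem hM. assert (H1 := Rmax_l NA 1). assert (H2 := Rmax_r NA 1).
  assert (H3 := Rmax_l NB 1). assert (H4 := Rmax_r NB 1).
  assert (he1 : / e > Rmax NA 1 + 1).
  { destruct hem as [he0 hed]. apply Rinv_lt_contravar in hed; [| apply Rmult_lt_0_compat; [auto| lra]].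
    rewrite Rinv_inv in hed. lra. }
  specialize (hA (/ e) ltac:(lra)). specialize (hB M ltac:(lra)).
  unfold A in hA. rewrite Rinv_inv in hA.
  assert (e < 1).
  { assert (0 < Rmax NA 1 + 1) by lra. destruct hem as [he0 hed].
    assert (Hq : / (Rmax NA 1 + 1) <= / 1) by (apply Rinv_le_contravar; lra).
    rewrite Rinv_1 in Hq. lra. }
  rewrite <- (RInt_Chasles (gf a) e 1 M) by (apply exg; lra).
  simpl. unfold plus; simpl. unfold B in hB.
  replace (CInt (gf a) e 1 + CInt (gf a) 1 M - (LA + LB)) with ((CInt (gf a) e 1 - LA) + (CInt (gf a) 1 M - LB)) by ring.
  eapply Rle_lt_trans; [apply Rabs_triang| lra].
Qed.
Lemma Gamma_rec a : 0 < a -> Gamma (a + 1) = a * Gamma a.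
Proof.
  intros ha. destruct (Gamma_exists a ha) as [l hl]. rewrite (Gamma_eq a l hl).
  assert (exg : forall b e M, 0 < e -> 0 < M -> ex_RInt (gf b) e M) by (intros; apply ex_pos; auto; intros; apply gf_cont; auto).
  set (Fb := fun t => - (Rpower t a * exp (- t))).
  assert (key : forall e M, 0 < e -> 0 < M -> CInt (gf (a + 1)) e M = 1 * (Fb M - Fb e) + a * CInt (gf a) e M).
  { intros e M he hM.
    assert (h1 : CInt (fun t => 1 * gf (a + 1) t + (- a) * gf a t) e M = Fb M - Fb e).
    { apply ftc.
      - intros u hu. assert (hu0 : 0 < u) by (destruct (Rle_dec e M); [rewrite Rmin_left in hu| rewrite Rmin_right in hu]; lra).
        eapply dpl_eq.
        + unfold Fb. apply derivable_pt_lim_opp. apply derivable_pt_lim_mult.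
          * apply derivable_pt_lim_power; auto.
          * apply (derivable_pt_lim_comp (fun t => - t) exp). 
            { apply derivable_pt_lim_opp, derivable_pt_lim_id. }
            apply derivable_pt_lim_exp.
        + unfold gf. replace (a + 1 - 1) with a by ring. ring.
      - intros u hu. assert (hu0 : 0 < u) by (destruct (Rle_dec e M); [rewrite Rmin_left in hu| rewrite Rmin_right in hu]; lra).
        apply continuity_pt_plus; apply continuity_pt_mult; try (apply continuity_pt_const; intros ? ?; reflexivity); apply gf_cont; auto. }
    rewrite CInt_lin2 in h1 by (apply exg; auto). lra. }
  apply Gamma_eq. apply is_int_0_inf_of; [intros; apply exg; auto|].
  apply lim2_ext with (fun e M => 1 * (Fb M - Fb e) + a * CInt (gf a) e M).
  { intros e M he hM. symmetry; apply key; lra. }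
  replace (a * l) with (1 * 0 + a * l) by ring.
  apply lim2_lin; [| apply is_int_0_inf_lim2; auto].
  intros eps he.
  set (C := exp (a * (ln (2 * a) - 1))). assert (hC : 0 < C) by apply exp_pos.
  exists (Rmin 1 (Rpower (eps / 2) (/ a))), (Rmax 1 (8 * C / eps)). split.
  { apply Rmin_pos; [lra| apply Rpower_pos]. }
  intros e M hem hM.
  assert (H1 := Rmin_l 1 (Rpower (eps / 2) (/ a))). assert (H2 := Rmin_r 1 (Rpower (eps / 2) (/ a))).
  assert (H3 := Rmax_l 1 (8 * C / eps)). assert (H4 := Rmax_r 1 (8 * C / eps)).
  assert (bE : Rabs (Fb e) < eps / 2).
  { unfold Fb. rewrite Rabs_Ropp, Rabs_mult, Rabs_right, Rabs_right by (left; try apply exp_pos; apply Rpower_pos).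
    assert (exp (- e) <= 1) by (rewrite <- exp_0; apply exp_le_mono; lra).
    assert (Rpower e a < eps / 2).
    { replace (eps / 2) with (Rpower (Rpower (eps / 2) (/ a)) a).
      - apply Rlt_Rpower_l; auto. lra.
      - rewrite Rpower_mult. replace (/ a * a) with 1 by (field; lra). apply Rpower_1; lra. }
    assert (hp := Rpower_pos e a). nra. }
  assert (bM : Rabs (Fb M) < eps / 2).
  { unfold Fb. rewrite Rabs_Ropp, Rabs_mult, Rabs_right, Rabs_right by (left; try apply exp_pos; apply Rpower_pos).
    unfold Rpower. rewrite <- exp_plus.
    assert (hlb := log_bound a M ha ltac:(lra)).
    assert (exp (a * ln M + - M) <= C * exp (- (M / 2))).
    { unfold C. rewrite <- exp_plus. apply exp_le_mono. lra. }
    assert (exp (- (M / 2)) < / (1 + M / 2)).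
    { rewrite exp_Ropp. apply Rinv_lt_contravar; [assert (Hep := exp_pos (M / 2)); nra|]. apply exp_ineq1. lra. }
    assert (C * / (1 + M / 2) <= eps / 4).
    { apply (Rmult_le_reg_r (1 + M / 2)); [lra|]. rewrite Rmult_assoc, Rinv_l, Rmult_1_r by lra.
      assert (8 * C / eps * eps = 8 * C) by (field; lra).
      assert (8 * C <= M * eps) by nra. nra. }
    assert (C * exp (- (M / 2)) < C * / (1 + M / 2)) by (apply Rmult_lt_compat_l; auto).
    lra. }
  replace (Fb M - Fb e - 0) with (Fb M - Fb e) by ring.
  eapply Rle_lt_trans; [apply Rabs_minus_le| lra].
Qed.

Lemma Gamma_fact a : 0 < a -> 2 / Beta a (1 / 2) * (1 / (2 * a)) = Gamma (a + 1 / 2) / (sqrt PI * Gamma (a + 1)).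
Proof.
  intros ha. rewrite Gamma_rec by auto. unfold Beta. rewrite Gamma_half.
  unfold Rdiv. rewrite !Rinv_mult, Rinv_inv. ring_simplify.
  replace (/ (2 * a)) with (/ 2 * / a) by (rewrite Rinv_mult; auto).
  match goal with |- ?L = ?R => replace L with ((2 * / 2) * R) by ring end.
  rewrite Rinv_r by lra. ring.
Qed.

Theorem theorem2p2 (c alpha : R) (g g' g'' : R -> R)
  (hc : 0 < c) (halpha : 0 < alpha)
  (hg1 : forall x, derivable_pt_lim g x (g' x))
  (hg2 : forall x, derivable_pt_lim g' x (g'' x))
  (hg3 : continuity g'') :
  (exists vt vtt vx vxx : R -> R -> R,
     forall x t, 0 < t ->
       derivable_pt_lim (fun s => v_sol alpha c g x s) t (vt x t) /\
       derivable_pt_lim (fun s => vt x s) t (vtt x t) /\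
       derivable_pt_lim (fun y => v_sol alpha c g y t) x (vx x t) /\
       derivable_pt_lim (fun y => vx y t) x (vxx x t) /\
       vtt x t + 2 * alpha / t * vt x t
         = c ^ 2 * vxx x t + 2 * g x / (t * Beta alpha (1 / 2)))
  /\ (forall x, v_sol alpha c g x 0 = 0)
  /\ (forall x, right_deriv (fun s => v_sol alpha c g x s) 0
        (Gamma (alpha + 1 / 2) / (sqrt PI * Gamma (alpha + 1)) * g x)).
Proof.
  apply (main_part c alpha g g' g''); auto.
  apply Gamma_fact; auto.
Qed.
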